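(* Let $\mathbf G_n$ be distributed either as the Poisson random factor graph $\mathbf G_n(d,\Omega,k,\Psi,\rho)$ or as the percolated regular factor graph $\mathbf G^\varepsilon_{n,\mathrm{reg}}(d,\Omega,k,\Psi,\rho)$ (for a fixed $\varepsilon>0$). If $$\lim_{\ell\to\infty}\limsup_{n\to\infty}\frac1n\sum_{i=1}^n\sum_{\sigma\in\Omega^n}\mathbb E\Big[\mu_{\mathbf G_n}(\sigma)\left\|\mu_{\mathbf G_n,x_i}-\mu_{\mathbf G_n,x_i}[\,\cdot\,|\nabla_\ell(\mathbf G_n,x_i,\sigma)]\right\|_{TV}\Big]=0,$$ then $$\lim_{n\to\infty}\frac1{n^2}\sum_{i,j=1}^n\mathbb E\left\|\mu_{\mathbf G_n,x_i,x_j}-\mu_{\mathbf G_n,x_i}\otimes\mu_{\mathbf G_n,x_j}\right\|_{TV}=0.$$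
   Context: Factor graphs: Fix a finite set $\Omega$ of spins. A factor graph $G$ has variable nodes $V(G)$, constraint nodes $F(G)$, for each $a\in F(G)$ an ordered tuple $\partial a$ of variable nodes and a weight function $\psi_a:\Omega^{|\partial a|}\to(0,\infty)$; Gibbs measure $\mu_G(\sigma)=Z_G^{-1}\prod_a\psi_a(\sigma(\partial a))$ on $\Omega^{V(G)}$. $\mu_{G,x}$, $\mu_{G,x,y}$ are one- and two-point marginals, and $\mu_{G,x}[\cdot|E]$ the marginal of $x$ under $\mu_G$ conditioned on an event $E\subset\Omega^{V(G)}$. The bipartite graph on $V(G)\cup F(G)$ joining $a$ with the variables in $\partial a$ induces a shortest-path metric. For $x\in V(G)$, $\ell\geq1$, $\sigma\in\Omega^{V(G)}$, $\nabla_\ell(G,x,\sigma)$ is the set of $\tau\in\Omega^{V(G)}$ with $\tau(y)=\sigma(y)$ for all variable nodes $y$ at distance greater than $\ell$ from $x$. Models: $d$ fixed (a positive integer for the regular model, $d>0$ for the Poisson model), $k\geq3$, $\Psi$ a finite nonempty set of functions $\Omega^k\to(0,\infty)$, $\rho$ a distribution on $\Psi$, all fixed as $n\to\infty$. Poisson model $\mathbf G_n(d,\Omega,k,\Psi,\rho)$: variable nodes $x_1,\ldots,x_n$, $m\sim\mathrm{Po}(dn/k)$ constraint nodes, each independently with $\psi_{a_i}\sim\rho$ and $\partial a_i$ uniform in $\{x_1,\ldots,x_n\}^k$. For $\psi\in\Psi$, $J\subset[k]$ let $\psi^J((\sigma_j)_{j\in J})=|\Omega|^{|J|-k}\sum_{(\sigma_j)_{j\notin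 J}}\psi(\sigma_1,\ldots,\sigma_k)$. Percolated regular model $\mathbf G^\varepsilon_{n,\mathrm{reg}}$: (REG1) $m\sim\mathrm{Po}(dn/k)$; (REG2) independently for $i\in[m]$, $J_i\subset[k]$ includes each element with probability $1-\varepsilon$ independently, $\psi_i\sim\rho$, and $a_i$ gets weight $\psi_i^{J_i}$ and $|J_i|$ ordered neighbour slots; (REG3) if $\sum_i|J_i|>dn$ start over, otherwise choose the neighbour tuples uniformly subject to every variable node having degree at most $d$. *)

(* Defs.v *)
From Stdlib Require Import Reals List Arith Bool Classical ClassicalDescription ClassicalEpsilon.
Import ListNotations.
Open Scope R_scope.

(* Spins Omega = {0,...,q-1}; variables x_1..x_n are 0..n-1. *)

Definition lsum {A : Type} (f : A -> R) (l : list A) : R :=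
  fold_right (fun a acc => f a + acc) 0 l.

Fixpoint tuples (n k : nat) : list (list nat) :=
  match k with
  | O => [[]]
  | S k' => flat_map (fun x => map (cons x) (tuples n k')) (seq 0 n)
  end.

(* a constraint node: weight function and ordered tuple of neighbours *)
Definition constraint : Type := ((list nat -> R) * list nat)%type.
Definition fgraph : Type := list constraint.

Definition weight (G : fgraph) (s : list nat) : R :=
  fold_right (fun a acc => fst a (map (fun v => nth v s 0%nat) (snd a)) * acc) 1 G.

Definition Zpart (q n : nat) (G : fgraph) : R := lsum (weight G) (tuples q n).

Definition gibbs (q n : nat) (G : fgraph) (s : list nat) : R := weight G s / Zpart q n G.

Definition marg1 (q n : nat) (G : fgraph) (x : nat) (a : nat) : R :=
  lsum (fun s => if Nat.eqb (nth x s 0%nat) a then gibbs q n G s else 0) (tuples q n).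

Definition marg2 (q n : nat) (G : fgraph) (x y : nat) (a b : nat) : R :=
  lsum (fun s => if Nat.eqb (nth x s 0%nat) a && Nat.eqb (nth y s 0%nat) b
                 then gibbs q n G s else 0) (tuples q n).

Definition condmarg (q n : nat) (G : fgraph) (x : nat) (E : list nat -> bool) (a : nat) : R :=
  lsum (fun s => if E s && Nat.eqb (nth x s 0%nat) a then gibbs q n G s else 0) (tuples q n)
  / lsum (fun s => if E s then gibbs q n G s else 0) (tuples q n).

Definition tv1 (q : nat) (p r : nat -> R) : R :=
  / 2 * lsum (fun a => Rabs (p a - r a)) (seq 0 q).

Definition tv2 (q : nat) (p r : nat -> nat -> R) : R :=
  / 2 * lsum (fun a => lsum (fun b => Rabs (p a b - r a b)) (seq 0 q)) (seq 0 q).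

(* near G x h y : variable y is reachable from x in at most h constraint hops,
   i.e. the bipartite distance between x and y is at most 2h. *)
Fixpoint near (G : fgraph) (h : nat) (x y : nat) {struct h} : bool :=
  match h with
  | O => Nat.eqb x y
  | S h' => near G h' x y ||
            existsb (fun a => existsb (fun z => near G h' x z) (snd a)
                              && existsb (Nat.eqb y) (snd a)) G
  end.

(* variable-to-variable distances are even, so dist(x,y) <= l iff y is
   within floor(l/2) constraint hops. *)
Definition dist_le (G : fgraph) (x y l : nat) : bool := near G (Nat.div2 l) x y.

Definition nabla (n : nat) (G : fgraph) (x l : nat) (sigma tau : list nat) : bool :=
  forallb (fun y => dist_le G x y l || Nat.eqb (nth y tau 0%nat) (nth y sigma 0%nat))
          (seq 0 n).

Definition series (u : nat -> R) : R :=
  match excluded_middle_informative (exists l, infinite_sum u l) with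
  | left H => proj1_sig (constructive_indefinite_description _ H)
  | right _ => 0
  end.

Definition po (lam : R) (m : nat) : R := exp (- lam) * lam ^ m / INR (fact m).

(* independent draws: m i.i.d. elements of a finite weighted list *)
Fixpoint draw_list {A : Type} (dr : list (R * A)) (m : nat) : list (R * list A) :=
  match m with
  | O => [(1, [])]
  | S m' => flat_map (fun c => map (fun cs => (fst c * fst cs, snd c :: snd cs))
                                   (draw_list dr m')) dr
  end.

(* rho : distribution on Psi, given as a list of (probability, weight function) *)
Definition spec (q k : nat) (rho : list (R * (list nat -> R))) : Prop :=
  rho <> [] /\ Forall (fun pw => 0 <= fst pw) rho /\ lsum fst rho = 1 /\
  Forall (fun pw => forall s, length s = k -> Forall (fun v => (v < q)%nat) s ->
                              0 < snd pw s) rho.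

Definition pois_draws (n k : nat) (rho : list (R * (list nat -> R))) : list (R * constraint) :=
  flat_map (fun pw => map (fun t => (fst pw / INR n ^ k, (snd pw, t))) (tuples n k)) rho.

Definition EPois (d : R) (k : nat) (rho : list (R * (list nat -> R))) (n : nat)
  (F : fgraph -> R) : R :=
  series (fun m => po (d * INR n / INR k) m *
    lsum (fun pc => fst pc * F (snd pc)) (draw_list (pois_draws n k rho) m)).

Definition subsets (k : nat) : list (list nat) :=
  map (fun b => filter (fun i => Nat.eqb (nth i b 0%nat) 1) (seq 0 k)) (tuples 2 k).

(* psi^J, arguments ordered by increasing index in J *)
Definition psiJ (q k : nat) (psi : list nat -> R) (J : list nat) (tau : list nat) : R :=
  lsum (fun s => if list_eq_dec Nat.eq_dec (map (fun j => nth j s 0%nat) J) tau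
                 then psi s else 0) (tuples q k)
  / INR q ^ (k - length J).

(* one factor: (weight function psi^J, arity |J|) with its probability *)
Definition reg_draws (q k : nat) (eps : R) (rho : list (R * (list nat -> R)))
  : list (R * ((list nat -> R) * nat)) :=
  flat_map (fun pw => map (fun J => (fst pw * (1 - eps) ^ length J * eps ^ (k - length J),
                                     (psiJ q k (snd pw) J, length J))) (subsets k)) rho.

Definition slots (ar : list ((list nat -> R) * nat)) : nat :=
  fold_right (fun a acc => (snd a + acc)%nat) 0%nat ar.

Definition deg_ok (n d : nat) (t : list nat) : bool :=
  forallb (fun v => Nat.leb (count_occ Nat.eq_dec t v) d) (seq 0 n).

Fixpoint build (ar : list ((list nat -> R) * nat)) (t : list nat) : fgraph :=
  match ar with
  | [] => []
  | a :: ar' => (fst a, firstn (snd a) t) :: build ar' (skipn (snd a) t)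
  end.

Definition reg_term (n d : nat) (F : fgraph -> R) (pc : R * list ((list nat -> R) * nat)) : R :=
  if Nat.leb (slots (snd pc)) (d * n) then
    let V := filter (deg_ok n d) (tuples n (slots (snd pc))) in
    fst pc * (lsum (fun t => F (build (snd pc) t)) V / INR (length V))
  else 0.

Definition reg_acc (n d : nat) (pc : R * list ((list nat -> R) * nat)) : R :=
  if Nat.leb (slots (snd pc)) (d * n) then fst pc else 0.

(* expectation of F(G^eps_{n,reg}): (REG1)-(REG2) conditioned on acceptance
   (REG3), neighbour slots uniform subject to max degree <= d *)
Definition EReg (q d k : nat) (eps : R) (rho : list (R * (list nat -> R))) (n : nat)
  (F : fgraph -> R) : R :=
  series (fun m => po (INR d * INR n / INR k) m *
           lsum (reg_term n d F) (draw_list (reg_draws q k eps rho) m))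
  / series (fun m => po (INR d * INR n / INR k) m *
           lsum (reg_acc n d) (draw_list (reg_draws q k eps rho) m)).

Definition overlap_quantity (q : nat) (E : nat -> (fgraph -> R) -> R) (l n : nat) : R :=
  / INR n * lsum (fun i => lsum (fun sigma =>
      E n (fun G => gibbs q n G sigma *
                    tv1 q (marg1 q n G i) (condmarg q n G i (nabla n G i l sigma))))
    (tuples q n)) (seq 0 n).

(* lim_{l->oo} limsup_{n->oo} a l n = 0, for a nonnegative double sequence *)
Definition lim_limsup_zero (a : nat -> nat -> R) : Prop :=
  forall e, e > 0 -> exists L, forall l, (l >= L)%nat ->
    exists N, forall n, (n >= N)%nat -> a l n < e.

Definition pair_corr (q : nat) (E : nat -> (fgraph -> R) -> R) (n : nat) : R :=
  / (INR n ^ 2) * lsum (fun i => lsum (fun j =>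
      E n (fun G => tv2 q (marg2 q n G i j) (fun a b => marg1 q n G i a * marg1 q n G j b)))
    (seq 0 n)) (seq 0 n).

(* Main.v *)
Require Import Defs.
From Stdlib Require Import Reals List Arith Lra Lia Bool.
From Stdlib Require Import FunctionalExtensionality Classical ClassicalDescription ClassicalEpsilon.
Import ListNotations.
Open Scope R_scope.

Lemma lsum_nil {A} (f : A -> R) : lsum f [] = 0.
Proof. reflexivity. Qed.
Lemma lsum_cons {A} (f : A -> R) a l : lsum f (a :: l) = f a + lsum f l.
Proof. reflexivity. Qed.
Lemma lsum_app {A} (f : A -> R) l1 l2 : lsum f (l1 ++ l2) = lsum f l1 + lsum f l2.
Proof. induction l1; simpl; [ring|]. unfold lsum in *; simpl. rewrite IHl1; ring. Qed.
Lemma lsum_map {A B} (f : B -> R) (g : A -> B) l : lsum f (map g l) = lsum (fun x => f (g x)) l.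
Proof. induction l; simpl; auto. unfold lsum in *; simpl. rewrite IHl; ring. Qed.
Lemma lsum_flat_map {A B} (f : B -> R) (g : A -> list B) l :
  lsum f (flat_map g l) = lsum (fun x => lsum f (g x)) l.
Proof. induction l; simpl; auto. rewrite lsum_app, IHl. reflexivity. Qed.
Lemma lsum_ext {A} (f g : A -> R) l : (forall x, In x l -> f x = g x) -> lsum f l = lsum g l.
Proof. induction l; intros H; simpl; auto. unfold lsum in *; simpl. rewrite H by (left; auto).
  rewrite IHl; auto. intros; apply H; right; auto. Qed.
Lemma lsum_plus {A} (f g : A -> R) l : lsum (fun x => f x + g x) l = lsum f l + lsum g l.
Proof. induction l; simpl; [unfold lsum; simpl; ring|]. unfold lsum in *; simpl. rewrite IHl; ring. Qed.
Lemma lsum_scal {A} (c : R) (f : A -> R) l : lsum (fun x => c * f x) l = c * lsum f l.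
Proof. induction l; simpl; [unfold lsum; simpl; ring|]. unfold lsum in *; simpl. rewrite IHl; ring. Qed.
Lemma lsum_scal_r {A} (c : R) (f : A -> R) l : lsum (fun x => f x * c) l = lsum f l * c.
Proof. rewrite <- (Rmult_comm c), <- lsum_scal. apply lsum_ext; intros; ring. Qed.
Lemma lsum_zero {A} (l : list A) : lsum (fun _ => 0) l = 0.
Proof. induction l; simpl; auto. unfold lsum in *; simpl. rewrite IHl; ring. Qed.
Lemma lsum_const {A} (c : R) (l : list A) : lsum (fun _ => c) l = INR (length l) * c.
Proof. induction l; simpl; [unfold lsum; simpl; ring|]. unfold lsum in *; simpl. rewrite IHl.
  destruct (length l); simpl; ring. Qed.
Lemma lsum_le {A} (f g : A -> R) l : (forall x, In x l -> f x <= g x) -> lsum f l <= lsum g l.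
Proof. induction l; intros H; simpl; [unfold lsum; simpl; lra|]. unfold lsum in *; simpl.
  assert (f a <= g a) by (apply H; left; auto).
  assert (fold_right (fun a0 acc => f a0 + acc) 0 l <= fold_right (fun a0 acc => g a0 + acc) 0 l)
   by (apply IHl; intros; apply H; right; auto). lra. Qed.
Lemma lsum_nonneg {A} (f : A -> R) l : (forall x, In x l -> 0 <= f x) -> 0 <= lsum f l.
Proof. intros H. rewrite <- (lsum_zero l). apply lsum_le; auto. Qed.
Lemma lsum_swap {A B} (f : A -> B -> R) l1 l2 :
  lsum (fun a => lsum (fun b => f a b) l2) l1 = lsum (fun b => lsum (fun a => f a b) l1) l2.
Proof. induction l1; simpl. symmetry; apply lsum_zero.
  change (lsum (fun b => f a b) l2 + lsum (fun a => lsum (fun b => f a b) l2) l1 =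
          lsum (fun b => f a b + lsum (fun a => f a b) l1) l2).
  rewrite lsum_plus, IHl1; reflexivity. Qed.
Lemma lsum_abs {A} (f : A -> R) l : Rabs (lsum f l) <= lsum (fun x => Rabs (f x)) l.
Proof. induction l; simpl. unfold lsum; simpl; rewrite Rabs_R0; lra.
  change (Rabs (f a + lsum f l) <= Rabs (f a) + lsum (fun x => Rabs (f x)) l).
  eapply Rle_trans; [apply Rabs_triang|]. lra. Qed.
Lemma lsum_In_le {A} (f : A -> R) l x : (forall y, In y l -> 0 <= f y) -> In x l -> f x <= lsum f l.
Proof. induction l; intros H Hx; [destruct Hx|]. simpl in Hx.
  change (f x <= f a + lsum f l).
  destruct Hx as [<-|Hx].
  - assert (0 <= lsum f l) by (apply lsum_nonneg; intros; apply H; right; auto). lra.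
  - assert (0 <= f a) by (apply H; left; auto).
    assert (f x <= lsum f l) by (apply IHl; auto; intros; apply H; right; auto). lra. Qed.
Lemma lsum_zero_nonneg {A} (f : A -> R) l x :
  (forall y, In y l -> 0 <= f y) -> In x l -> lsum f l = 0 -> f x = 0.
Proof. intros H Hx E. pose proof (lsum_In_le f l x H Hx). pose proof (H x Hx). lra. Qed.

Definition indb (b : bool) : R := if b then 1 else 0.
Lemma indb_nonneg b : 0 <= indb b.
Proof. destruct b; simpl; lra. Qed.
Lemma indb_le1 b : indb b <= 1.
Proof. destruct b; simpl; lra. Qed.
Lemma if_ind (b : bool) (x : R) : (if b then x else 0) = indb b * x.
Proof. destruct b; simpl; ring. Qed.
Lemma indb_andb b c : indb (b && c) = indb b * indb c.
Proof. destruct b, c; simpl; ring. Qed.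
Lemma indb_orb b c : indb (b || c) <= indb b + indb c.
Proof. destruct b, c; simpl; lra. Qed.

Lemma indb_seq v s len : lsum (fun a => indb (Nat.eqb v a)) (seq s len) <= 1.
Proof.
  revert s. induction len; intros s; simpl. unfold lsum; simpl; lra.
  change (indb (Nat.eqb v s) + lsum (fun a => indb (Nat.eqb v a)) (seq (S s) len) <= 1).
  destruct (Nat.eqb_spec v s).
  - subst. rewrite lsum_ext with (g := fun _ => 0). rewrite lsum_zero; simpl; lra.
    intros x Hx. apply in_seq in Hx. destruct (Nat.eqb_spec s x); [lia|reflexivity].
  - simpl. specialize (IHlen (S s)). lra.
Qed.
Lemma indb_seq' v s len : lsum (fun a => indb (Nat.eqb a v)) (seq s len) <= 1.
Proof. rewrite lsum_ext with (g := fun a => indb (Nat.eqb v a)). apply indb_seq.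
  intros; rewrite Nat.eqb_sym; auto. Qed.

Lemma lsum_existsb {A} (f : A -> bool) l : indb (existsb f l) <= lsum (fun a => indb (f a)) l.
Proof. induction l; simpl. unfold lsum; simpl; lra.
  change (indb (f a || existsb f l) <= indb (f a) + lsum (fun a => indb (f a)) l).
  eapply Rle_trans; [apply indb_orb|]. lra. Qed.

Definition cnt (t : list nat) (z : nat) : R := INR (count_occ Nat.eq_dec t z).
Lemma cnt_cons v t z : cnt (v :: t) z = indb (Nat.eqb v z) + cnt t z.
Proof. unfold cnt, indb; simpl. destruct (Nat.eq_dec v z); destruct (Nat.eqb_spec v z); try lia.
  rewrite S_INR; lra. lra. Qed.
Lemma cnt_nonneg t z : 0 <= cnt t z.
Proof. apply pos_INR. Qed.
Lemma lsum_cnt t s len : lsum (fun y => cnt t y) (seq s len) <= INR (length t).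
Proof. induction t. simpl. unfold cnt; simpl. rewrite lsum_zero; lra.
  rewrite lsum_ext with (g := fun y => indb (Nat.eqb a y) + cnt t y) by (intros; apply cnt_cons).
  rewrite lsum_plus. simpl length. rewrite S_INR. pose proof (indb_seq a s len).
  assert (lsum (cnt t) (seq s len) <= INR (length t)) by exact IHt. lra. Qed.
Lemma indb_existsb_eq y t : indb (existsb (Nat.eqb y) t) <= cnt t y.
Proof. induction t; simpl. unfold cnt; simpl; lra.
  rewrite cnt_cons. eapply Rle_trans; [apply indb_orb|]. rewrite Nat.eqb_sym. lra. Qed.

Lemma Rinv_nonneg x : 0 <= x -> 0 <= / x.
Proof. intros H. destruct (Req_dec x 0). subst; rewrite Rinv_0; lra.
  left; apply Rinv_0_lt_compat; lra. Qed.
Lemma div_nonneg x y : 0 <= x -> 0 <= y -> 0 <= x / y.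
Proof. intros; unfold Rdiv; apply Rmult_le_pos; auto; apply Rinv_nonneg; auto. Qed.
Lemma div_le1 x y : 0 <= x <= y -> x / y <= 1.
Proof. intros [H1 H2]. destruct (Req_dec y 0). subst. unfold Rdiv; rewrite Rinv_0; lra.
  apply (Rmult_le_reg_r y); [lra|]. unfold Rdiv; rewrite Rmult_assoc, Rinv_l; lra. Qed.

Lemma series_eq u l : infinite_sum u l -> series u = l.
Proof. intros H. unfold series. destruct (excluded_middle_informative _) as [e|n].
  - destruct (constructive_indefinite_description _ e) as [l' Hl']. simpl.
    eapply uniqueness_sum; eauto.
  - exfalso; apply n; eauto. Qed.

Lemma inf_plus u v lu lv : infinite_sum u lu -> infinite_sum v lv ->
  infinite_sum (fun m => u m + v m) (lu + lv).
Proof. intros Hu Hv. change (Un_cv (fun N => sum_f_R0 (fun m => u m + v m) N) (lu + lv)).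
  eapply Un_cv_ext. intros; symmetry; apply sum_plus.
  apply CV_plus; auto. Qed.

Lemma inf_scal c u l : infinite_sum u l -> infinite_sum (fun m => c * u m) (c * l).
Proof. intros Hu. change (Un_cv (fun N => sum_f_R0 (fun m => c * u m) N) (c * l)).
  apply Un_cv_ext with (un := fun N => c * sum_f_R0 u N).
  intros n; rewrite scal_sum. apply sum_eq; intros; ring.
  apply (CV_mult (fun _ => c) (fun N => sum_f_R0 u N)); auto. intros e He; exists 0%nat; intros; unfold R_dist.
  rewrite Rminus_diag, Rabs_R0; lra. Qed.

Lemma inf_zero : infinite_sum (fun _ => 0) 0.
Proof. intros e He; exists 0%nat; intros n _. unfold R_dist.
  assert (sum_f_R0 (fun _ => 0) n = 0). induction n; simpl; auto. rewrite IHn; ring.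
  rewrite H, Rminus_diag, Rabs_R0; lra. Qed.

Lemma inf_ext u v l : (forall m, u m = v m) -> infinite_sum u l -> infinite_sum v l.
Proof. intros E H. replace v with u; auto. apply functional_extensionality; auto. Qed.

Lemma inf_lsum {A} (u : A -> nat -> R) (U : A -> R) l :
  (forall i, In i l -> infinite_sum (u i) (U i)) ->
  infinite_sum (fun m => lsum (fun i => u i m) l) (lsum U l).
Proof. induction l; intros H; simpl.
  - apply inf_zero.
  - apply inf_plus. apply H; left; auto. apply IHl; intros; apply H; right; auto. Qed.

Lemma inf_le u v lu lv : (forall m, u m <= v m) -> infinite_sum u lu -> infinite_sum v lv -> lu <= lv.
Proof. intros H Hu Hv. eapply Rle_cv_lim; [|exact Hu|exact Hv].
  intros n. induction n; simpl; auto. apply Rplus_le_compat; auto. Qed.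

Lemma inf_comp u v lv : (forall m, 0 <= u m <= v m) -> infinite_sum v lv ->
  exists lu, infinite_sum u lu.
Proof. intros H Hv. destruct (Rseries_CV_comp u v H (exist _ lv Hv)) as [l Hl]. exists l; exact Hl. Qed.

Lemma inf_nonneg u l : (forall m, 0 <= u m) -> infinite_sum u l -> 0 <= l.
Proof. intros H Hu. apply (inf_le (fun _ => 0) u 0 l); auto. apply inf_zero. Qed.

Lemma inf_first u l : (forall m, 0 <= u m) -> infinite_sum u l -> u 0%nat <= l.
Proof. intros H Hu. apply (sum_incr u 0 l); auto. Qed.

Lemma po_nonneg lam m : 0 <= lam -> 0 <= po lam m.
Proof. intros. unfold po. apply div_nonneg. apply Rmult_le_pos. left; apply exp_pos.
  apply pow_le; auto. apply pos_INR. Qed.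

Lemma exp_inf x : infinite_sum (fun i => / INR (fact i) * x ^ i) (exp x).
Proof. exact (proj2_sig (exist_exp x)). Qed.

Lemma po_geom lam S : infinite_sum (fun m => po lam m * S ^ m) (exp (- lam) * exp (lam * S)).
Proof. apply inf_ext with (u := fun m => exp (- lam) * (/ INR (fact m) * (lam * S) ^ m)).
  intros m. unfold po. rewrite Rpow_mult_distr. unfold Rdiv. ring.
  apply inf_scal, exp_inf. Qed.

Lemma tuples_prop n k s : In s (tuples n k) -> length s = k /\ Forall (fun v => (v < n)%nat) s.
Proof. revert s; induction k; intros s H; simpl in H.
  - destruct H as [<-|[]]. simpl; auto.
  - apply in_flat_map in H. destruct H as [x [Hx H]]. apply in_map_iff in H.
    destruct H as [s' [<- Hs']]. apply IHk in Hs'. destruct Hs' as [L F].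
    apply in_seq in Hx. simpl. split; auto. constructor; auto; lia. Qed.

Lemma length_tuples n k : length (tuples n k) = (n ^ k)%nat.
Proof. induction k; simpl; auto. rewrite length_flat_map.
  rewrite map_ext with (g := fun _ => (n ^ k)%nat) by (intros; rewrite length_map; auto).
  generalize (n ^ k)%nat. intros c. generalize 0%nat. clear. induction n; intros s; simpl; auto.
  Qed.

Lemma nth_Forall (P : nat -> Prop) s v d : Forall P s -> P d -> P (nth v s d).
Proof. revert v; induction s; intros v H Hd; destruct v; simpl; auto; inversion H; auto. Qed.

Definition good_c (q n k : nat) (a : constraint) : Prop :=
  (length (snd a) <= k)%nat /\ Forall (fun v => (v < n)%nat) (snd a) /\
  forall s, length s = length (snd a) -> Forall (fun v => (v < q)%nat) s -> 0 <= fst a s.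

Definition good_w (q n : nat) (G : fgraph) : Prop :=
  forall s, In s (tuples q n) -> 0 <= weight G s.

Lemma good_w_of q n k G : (1 <= q)%nat -> Forall (good_c q n k) G -> good_w q n G.
Proof. intros Hq HG s Hs. apply tuples_prop in Hs. destruct Hs as [_ Fs].
  induction G; simpl; [lra|]. inversion HG; subst. apply Rmult_le_pos; auto.
  destruct H1 as [_ [_ P]]. apply P. rewrite length_map; auto.
  apply Forall_map. apply Forall_forall. intros v _. apply (nth_Forall (fun v => (v < q)%nat)); auto; lia. Qed.

Lemma Zpart_nonneg q n G : good_w q n G -> 0 <= Zpart q n G.
Proof. intros H. apply lsum_nonneg; auto. Qed.

Lemma gibbs_nonneg q n G s : good_w q n G -> In s (tuples q n) -> 0 <= gibbs q n G s.
Proof. intros H Hs. unfold gibbs. apply div_nonneg; auto. apply Zpart_nonneg; auto. Qed.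

Lemma gibbs_sum q n G : good_w q n G -> lsum (gibbs q n G) (tuples q n) <= 1.
Proof. intros H. unfold gibbs. unfold Rdiv. rewrite lsum_scal_r. fold (Zpart q n G).
  apply div_le1. pose proof (Zpart_nonneg q n G H); lra. Qed.

Lemma gibbs_le1 q n G s : good_w q n G -> In s (tuples q n) -> gibbs q n G s <= 1.
Proof. intros H Hs. eapply Rle_trans; [|apply (gibbs_sum q n G H)]. apply lsum_In_le; [intros; apply gibbs_nonneg; auto| auto]. Qed.

Lemma marg1_ind q n G x a :
  marg1 q n G x a = lsum (fun s => indb (Nat.eqb (nth x s 0%nat) a) * gibbs q n G s) (tuples q n).
Proof. unfold marg1. apply lsum_ext; intros; apply if_ind. Qed.

Lemma marg2_ind q n G x y a b :
  marg2 q n G x y a b = lsum (fun s => indb (Nat.eqb (nth x s 0%nat) a) * indb (Nat.eqb (nth y s 0%nat) b) * gibbs q n G s) (tuples q n).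
Proof. unfold marg2. apply lsum_ext; intros; rewrite if_ind, indb_andb; ring. Qed.

Lemma marg1_nonneg q n G x a : good_w q n G -> 0 <= marg1 q n G x a.
Proof. intros H. rewrite marg1_ind. apply lsum_nonneg; intros. apply Rmult_le_pos.
  apply indb_nonneg. apply gibbs_nonneg; auto. Qed.

Lemma marg2_nonneg q n G x y a b : good_w q n G -> 0 <= marg2 q n G x y a b.
Proof. intros H. rewrite marg2_ind. apply lsum_nonneg; intros. apply Rmult_le_pos;
  [apply Rmult_le_pos; apply indb_nonneg|apply gibbs_nonneg; auto]. Qed.

Lemma marg1_sum q n G x : good_w q n G -> lsum (marg1 q n G x) (seq 0 q) <= 1.
Proof. intros H. rewrite lsum_ext with (g := fun a => lsum (fun s => indb (Nat.eqb (nth x s 0%nat) a) * gibbs q n G s) (tuples q n)) by (intros; apply marg1_ind).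
  rewrite lsum_swap. apply Rle_trans with (r2 := lsum (gibbs q n G) (tuples q n)); [|apply (gibbs_sum q n G H)]. apply lsum_le.
  intros s Hs. rewrite lsum_scal_r. pose proof (indb_seq (nth x s 0%nat) 0 q).
  pose proof (gibbs_nonneg q n G s H Hs).
  apply Rmult_le_compat_r with (r := gibbs q n G s) in H0; auto. lra. Qed.

Lemma marg2_sum q n G x y : good_w q n G ->
  lsum (fun a => lsum (fun b => marg2 q n G x y a b) (seq 0 q)) (seq 0 q) <= 1.
Proof. intros H.
  rewrite lsum_ext with (g := fun a => lsum (fun s => indb (Nat.eqb (nth x s 0%nat) a) * (lsum (fun b => indb (Nat.eqb (nth y s 0%nat) b)) (seq 0 q) * gibbs q n G s)) (tuples q n)).
  2:{ intros a _. rewrite lsum_ext with (g := fun b => lsum (fun s => indb (Nat.eqb (nth x s 0%nat) a) * indb (Nat.eqb (nth y s 0%nat) b) * gibbs q n G s) (tuples q n)) by (intros; apply marg2_ind).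
      rewrite lsum_swap. apply lsum_ext; intros s _. rewrite <- lsum_scal_r, <- lsum_scal.
      apply lsum_ext; intros; ring. }
  rewrite lsum_swap. apply Rle_trans with (r2 := lsum (gibbs q n G) (tuples q n)); [|apply (gibbs_sum q n G H)]. apply lsum_le.
  intros s Hs. rewrite lsum_scal_r. pose proof (indb_seq (nth x s 0%nat) 0 q).
  pose proof (indb_seq (nth y s 0%nat) 0 q).
  pose proof (gibbs_nonneg q n G s H Hs).
  assert (0 <= lsum (fun b => indb (Nat.eqb (nth y s 0%nat) b)) (seq 0 q)) by (apply lsum_nonneg; intros; apply indb_nonneg).
  assert (0 <= lsum (fun a => indb (Nat.eqb (nth x s 0%nat) a)) (seq 0 q)) by (apply lsum_nonneg; intros; apply indb_nonneg).
  set (A := lsum (fun a => indb (Nat.eqb (nth x s 0%nat) a)) (seq 0 q)) in *.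
  set (B := lsum (fun b => indb (Nat.eqb (nth y s 0%nat) b)) (seq 0 q)) in *.
  set (g := gibbs q n G s) in *.
  assert (A * (B * g) <= 1 * (1 * g)). apply Rmult_le_compat; auto. apply Rmult_le_pos; auto.
  apply Rmult_le_compat_r; auto. lra. Qed.

Lemma tv1_nonneg q p r : 0 <= tv1 q p r.
Proof. unfold tv1. apply Rmult_le_pos; [lra|]. apply lsum_nonneg; intros; apply Rabs_pos. Qed.
Lemma tv2_nonneg q p r : 0 <= tv2 q p r.
Proof. unfold tv2. apply Rmult_le_pos; [lra|]. apply lsum_nonneg; intros; apply lsum_nonneg; intros; apply Rabs_pos. Qed.

Lemma abs_le_sum x y : 0 <= x -> 0 <= y -> Rabs (x - y) <= x + y.
Proof. intros. unfold Rabs; destruct (Rcase_abs _); lra. Qed.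

Lemma tv1_le1 q p r : (forall a, 0 <= p a) -> (forall a, 0 <= r a) ->
  lsum p (seq 0 q) <= 1 -> lsum r (seq 0 q) <= 1 -> tv1 q p r <= 1.
Proof. intros Hp Hr Sp Sr. unfold tv1.
  assert (lsum (fun a => Rabs (p a - r a)) (seq 0 q) <= lsum (fun a => p a + r a) (seq 0 q)).
  apply lsum_le; intros; apply abs_le_sum; auto. rewrite lsum_plus in H. lra. Qed.

Lemma tv2_le1 q n G x y : good_w q n G ->
  tv2 q (marg2 q n G x y) (fun a b => marg1 q n G x a * marg1 q n G y b) <= 1.
Proof. intros H. unfold tv2.
  assert (lsum (fun a => lsum (fun b => Rabs (marg2 q n G x y a b - marg1 q n G x a * marg1 q n G y b)) (seq 0 q)) (seq 0 q)
   <= lsum (fun a => lsum (fun b => marg2 q n G x y a b) (seq 0 q)) (seq 0 q) +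
      lsum (fun a => lsum (fun b => marg1 q n G x a * marg1 q n G y b) (seq 0 q)) (seq 0 q)).
  { rewrite <- lsum_plus. apply lsum_le; intros. rewrite <- lsum_plus. apply lsum_le; intros.
    apply abs_le_sum. apply marg2_nonneg; auto. apply Rmult_le_pos; apply marg1_nonneg; auto. }
  pose proof (marg2_sum q n G x y H).
  assert (E: lsum (fun a => lsum (fun b => marg1 q n G x a * marg1 q n G y b) (seq 0 q)) (seq 0 q)
    = lsum (marg1 q n G x) (seq 0 q) * lsum (marg1 q n G y) (seq 0 q)).
  { rewrite <- lsum_scal_r. apply lsum_ext; intros. apply lsum_scal. }
  rewrite E in H0.
  pose proof (marg1_sum q n G x H). pose proof (marg1_sum q n G y H).
  assert (0 <= lsum (marg1 q n G y) (seq 0 q)) by (apply lsum_nonneg; intros; apply marg1_nonneg; auto).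
  assert (0 <= lsum (marg1 q n G x) (seq 0 q)) by (apply lsum_nonneg; intros; apply marg1_nonneg; auto).
  assert (lsum (marg1 q n G x) (seq 0 q) * lsum (marg1 q n G y) (seq 0 q) <= 1 * 1)
    by (apply Rmult_le_compat; auto).
  lra. Qed.

Lemma claimA (ts : list (list nat)) (mu : list nat -> R) (E : list nat -> list nat -> bool) (f g : list nat -> R) :
  (forall s, In s ts -> 0 <= mu s) ->
  (forall s t, E s t = E t s) ->
  (forall s t r, E s t = true -> E s r = E t r) ->
  (forall s t, E s t = true -> f s = f t) ->
  (forall s, E s s = true) ->
  lsum (fun s => mu s * f s * (lsum (fun t => indb (E s t) * g t * mu t) ts /
                               lsum (fun t => indb (E s t) * mu t) ts)) ts
  = lsum (fun t => g t * f t * mu t) ts.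
Proof.
  intros Hmu Hsym Htr Hf Hrefl.
  set (D := fun s => lsum (fun t => indb (E s t) * mu t) ts).
  transitivity (lsum (fun s => lsum (fun t => mu s * f s / D s * (indb (E s t) * g t * mu t)) ts) ts).
  { apply lsum_ext; intros s _. unfold Rdiv. rewrite lsum_scal. fold (D s). ring. }
  rewrite lsum_swap. apply lsum_ext; intros t Ht.
  transitivity (lsum (fun s => indb (E t s) * mu s * (f t / D t * g t * mu t)) ts).
  { apply lsum_ext; intros s _. rewrite (Hsym t s).
    destruct (E s t) eqn:Est; simpl.
    - rewrite (Hf s t Est). assert (D s = D t). unfold D. apply lsum_ext; intros r _.
      rewrite (Htr s t r Est); auto. rewrite H. unfold Rdiv. ring.
    - ring. }
  rewrite lsum_scal_r. fold (D t).
  destruct (Req_dec (D t) 0) as [Z|Z].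
  - assert (mu t = 0).
    { assert (indb (E t t) * mu t = 0). apply (lsum_zero_nonneg (fun r => indb (E t r) * mu r) ts t); auto.
      intros; apply Rmult_le_pos; [apply indb_nonneg|auto].
      rewrite Hrefl in H; simpl in H; lra. }
    rewrite H, Z. ring.
  - field; auto.
Qed.

Lemma lsum_minus {A} (f g : A -> R) l : lsum f l - lsum g l = lsum (fun x => f x - g x) l.
Proof. unfold Rminus. rewrite lsum_plus. f_equal. rewrite <- (Rmult_1_l (lsum g l)), Ropp_mult_distr_l.
  rewrite <- lsum_scal. apply lsum_ext; intros; ring. Qed.

Lemma forallb_ext' {A} (f g : A -> bool) l : (forall x, In x l -> f x = g x) -> forallb f l = forallb g l.
Proof. induction l; simpl; auto; intros H. rewrite H by auto. rewrite IHl; auto. Qed.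

Lemma nabla_sym n G x l s t : nabla n G x l s t = nabla n G x l t s.
Proof. unfold nabla. apply forallb_ext'; intros y _. rewrite Nat.eqb_sym; auto. Qed.

Lemma nabla_refl n G x l s : nabla n G x l s s = true.
Proof. unfold nabla. apply forallb_forall; intros y _. rewrite Nat.eqb_refl, orb_true_r; auto. Qed.

Lemma nabla_tr n G x l s t r : nabla n G x l s t = true -> nabla n G x l s r = nabla n G x l t r.
Proof. unfold nabla. intros H. rewrite forallb_forall in H. apply forallb_ext'; intros y Hy.
  specialize (H y Hy). destruct (dist_le G x y l); simpl in *; auto.
  apply Nat.eqb_eq in H. rewrite H; auto. Qed.

Lemma nabla_far n G x l s t j : (j < n)%nat -> dist_le G x j l = false ->
  nabla n G x l s t = true -> nth j t 0%nat = nth j s 0%nat.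
Proof. unfold nabla. intros Hj Hd H. rewrite forallb_forall in H.
  specialize (H j (proj2 (in_seq _ _ _) (conj (Nat.le_0_l _) Hj))). rewrite Hd in H; simpl in H.
  apply Nat.eqb_eq; auto. Qed.

Lemma far_bound q n G i j l : good_w q n G -> (j < n)%nat -> dist_le G i j l = false ->
  tv2 q (marg2 q n G i j) (fun a b => marg1 q n G i a * marg1 q n G j b)
  <= lsum (fun s => gibbs q n G s * tv1 q (marg1 q n G i) (condmarg q n G i (nabla n G i l s))) (tuples q n).
Proof.
  intros Hw Hj Hd.
  set (ts := tuples q n). set (mu := gibbs q n G).
  set (c := fun s a => condmarg q n G i (nabla n G i l s) a).
  set (mi := marg1 q n G i). set (mj := marg1 q n G j).
  assert (Hmu : forall s, In s ts -> 0 <= mu s) by (intros; apply gibbs_nonneg; auto).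
  assert (Key : forall a b, marg2 q n G i j a b - mi a * mj b =
     lsum (fun s => mu s * indb (Nat.eqb (nth j s 0%nat) b) * (c s a - mi a)) ts).
  { intros a b.
    assert (A1 : lsum (fun s => mu s * indb (Nat.eqb (nth j s 0%nat) b) * c s a) ts = marg2 q n G i j a b).
    { rewrite marg2_ind. fold ts mu.
      unfold c, condmarg. fold ts mu.
      rewrite lsum_ext with (g := fun s => mu s * indb (Nat.eqb (nth j s 0%nat) b) *
          (lsum (fun t => indb (nabla n G i l s t) * indb (Nat.eqb (nth i t 0%nat) a) * mu t) ts /
           lsum (fun t => indb (nabla n G i l s t) * mu t) ts)).
      2:{ intros s _. f_equal. f_equal.
          - apply lsum_ext; intros; rewrite if_ind, indb_andb; reflexivity.
          - apply lsum_ext; intros; rewrite if_ind; reflexivity. }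
      rewrite claimA; [apply lsum_ext; intros; ring | exact Hmu | intros; apply nabla_sym
        | intros; apply nabla_tr; auto
        | intros s t H; rewrite (nabla_far n G i l s t j); auto
        | intros; apply nabla_refl]. }
    rewrite <- A1.
    assert (A2 : mi a * mj b = lsum (fun s => mu s * indb (Nat.eqb (nth j s 0%nat) b) * mi a) ts).
    { unfold mj. rewrite marg1_ind. fold ts mu. rewrite <- lsum_scal. apply lsum_ext; intros; ring. }
    rewrite A2. rewrite lsum_minus. apply lsum_ext; intros; ring. }
  unfold tv2, tv1.
  apply Rle_trans with (r2 := / 2 * lsum (fun s => mu s * lsum (fun a => Rabs (mi a - c s a)) (seq 0 q)) ts).
  2:{ rewrite <- lsum_scal. apply Req_le. apply lsum_ext; intros. fold mi. unfold c. ring. }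
  apply Rmult_le_compat_l; [lra|].
  apply Rle_trans with (r2 := lsum (fun a => lsum (fun s => mu s * Rabs (c s a - mi a)) ts) (seq 0 q)).
  2:{ rewrite lsum_swap. apply Req_le. apply lsum_ext; intros s _. rewrite <- lsum_scal.
      apply lsum_ext; intros. rewrite Rabs_minus_sym. reflexivity. }
  apply lsum_le; intros a _.
  apply Rle_trans with (r2 := lsum (fun b => lsum (fun s => mu s * indb (Nat.eqb (nth j s 0%nat) b) * Rabs (c s a - mi a)) ts) (seq 0 q)).
  { apply lsum_le; intros b _. fold mi mj. rewrite Key. eapply Rle_trans; [apply lsum_abs|].
    apply lsum_le; intros s Hs. rewrite !Rabs_mult. rewrite (Rabs_right (mu s)) by (apply Rle_ge; auto).
    rewrite (Rabs_right (indb _)) by (apply Rle_ge, indb_nonneg). lra. }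
  rewrite lsum_swap. apply lsum_le; intros s Hs.
  rewrite lsum_ext with (g := fun b => indb (Nat.eqb (nth j s 0%nat) b) * (mu s * Rabs (c s a - mi a)))
    by (intros; ring).
  rewrite lsum_scal_r. pose proof (indb_seq (nth j s 0%nat) 0 q).
  assert (0 <= mu s * Rabs (c s a - mi a)) by (apply Rmult_le_pos; auto; apply Rabs_pos).
  apply Rmult_le_compat_r with (r := mu s * Rabs (c s a - mi a)) in H; auto. lra.
Qed.

Lemma condmarg_nonneg q n G x E a : good_w q n G -> 0 <= condmarg q n G x E a.
Proof. intros H. unfold condmarg. apply div_nonneg; apply lsum_nonneg; intros s Hs;
  [destruct (E s && _)|destruct (E s)]; try lra; apply gibbs_nonneg; auto. Qed.

Lemma condmarg_sum q n G x E : good_w q n G -> lsum (condmarg q n G x E) (seq 0 q) <= 1.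
Proof. intros H. unfold condmarg. unfold Rdiv. rewrite lsum_scal_r. apply div_le1. split.
  - apply lsum_nonneg; intros a _. apply lsum_nonneg; intros s Hs. destruct (E s && _); try lra; apply gibbs_nonneg; auto.
  - rewrite lsum_swap. apply lsum_le; intros s Hs.
    rewrite lsum_ext with (g := fun a => indb (Nat.eqb (nth x s 0%nat) a) * (indb (E s) * gibbs q n G s))
      by (intros; rewrite if_ind, indb_andb; ring).
    rewrite if_ind, lsum_scal_r. pose proof (indb_seq (nth x s 0%nat) 0 q).
    assert (0 <= indb (E s) * gibbs q n G s) by (apply Rmult_le_pos; [apply indb_nonneg|apply gibbs_nonneg; auto]).
    apply Rmult_le_compat_r with (r := indb (E s) * gibbs q n G s) in H0; auto. lra. Qed.

Lemma tv1_cond_le1 q n G x E : good_w q n G ->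
  tv1 q (marg1 q n G x) (condmarg q n G x E) <= 1.
Proof. intros H. apply tv1_le1; intros; auto using marg1_nonneg, condmarg_nonneg, marg1_sum, condmarg_sum. Qed.

Definition Ncnt (n : nat) (G : fgraph) (l : nat) : R :=
  lsum (fun i => lsum (fun j => indb (dist_le G i j l)) (seq 0 n)) (seq 0 n).
Definition Sov (q n : nat) (G : fgraph) (l i : nat) : R :=
  lsum (fun s => gibbs q n G s * tv1 q (marg1 q n G i) (condmarg q n G i (nabla n G i l s))) (tuples q n).

Lemma Sov_nonneg q n G l i : good_w q n G -> 0 <= Sov q n G l i.
Proof. intros H. apply lsum_nonneg; intros. apply Rmult_le_pos. apply gibbs_nonneg; auto. apply tv1_nonneg. Qed.

Lemma graph_bound q n G l : good_w q n G ->
  lsum (fun i => lsum (fun j => tv2 q (marg2 q n G i j) (fun a b => marg1 q n G i a * marg1 q n G j b)) (seq 0 n)) (seq 0 n)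
  <= Ncnt n G l + INR n * lsum (fun i => Sov q n G l i) (seq 0 n).
Proof. intros H.
  apply Rle_trans with (r2 := lsum (fun i => lsum (fun j => indb (dist_le G i j l) + Sov q n G l i) (seq 0 n)) (seq 0 n)).
  - apply lsum_le; intros i _. apply lsum_le; intros j Hj. apply in_seq in Hj.
    pose proof (Sov_nonneg q n G l i H).
    destruct (dist_le G i j l) eqn:D; simpl.
    + pose proof (tv2_le1 q n G i j H). lra.
    + pose proof (far_bound q n G i j l H ltac:(lia) D). unfold Sov. lra.
  - apply Req_le. unfold Ncnt. rewrite <- lsum_scal, <- lsum_plus. apply lsum_ext; intros i _.
    rewrite lsum_plus, lsum_const, length_seq. reflexivity. Qed.

Definition degn (G : fgraph) (z : nat) : nat :=
  fold_right (fun a acc => (count_occ Nat.eq_dec (snd a) z + acc)%nat) 0%nat G.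

Lemma degn_lsum G z : INR (degn G z) = lsum (fun a => cnt (snd a) z) G.
Proof. induction G; simpl; auto. rewrite plus_INR. unfold lsum in *; simpl. rewrite IHG. reflexivity. Qed.

Lemma ball_bound q n k G Dr : Forall (good_c q n k) G -> 0 <= Dr ->
  (forall z, (z < n)%nat -> INR (degn G z) <= Dr) ->
  forall h x, lsum (fun y => indb (near G h x y)) (seq 0 n) <= (1 + INR k * Dr) ^ h.
Proof.
  intros HG HD Hdeg. induction h; intros x.
  - simpl. apply indb_seq.
  - set (B := lsum (fun y => indb (near G h x y)) (seq 0 n)).
    assert (HB : B <= (1 + INR k * Dr) ^ h) by apply IHh.
    assert (B0 : 0 <= B) by (apply lsum_nonneg; intros; apply indb_nonneg).
    set (e := fun a : constraint => existsb (fun z => near G h x z) (snd a)).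
    apply Rle_trans with (r2 := B + lsum (fun a => indb (e a) * lsum (fun y => indb (existsb (Nat.eqb y) (snd a))) (seq 0 n)) G).
    + unfold B. rewrite (lsum_ext _ (fun a => lsum (fun y => indb (e a) * indb (existsb (Nat.eqb y) (snd a))) (seq 0 n)) G)
        by (intros; symmetry; apply lsum_scal).
      rewrite lsum_swap, <- lsum_plus. apply lsum_le; intros y _. simpl.
      eapply Rle_trans; [apply indb_orb|]. apply Rplus_le_compat_l.
      eapply Rle_trans; [apply lsum_existsb|]. apply lsum_le; intros a _. rewrite indb_andb. apply Req_le; reflexivity.
    + apply Rle_trans with (r2 := B + INR k * lsum (fun a => indb (e a)) G).
      { apply Rplus_le_compat_l. rewrite <- lsum_scal. apply lsum_le; intros a Ha.
        rewrite Forall_forall in HG. destruct (HG a Ha) as [Hl _].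
        rewrite Rmult_comm. apply Rmult_le_compat_r. apply indb_nonneg.
        eapply Rle_trans. apply lsum_le; intros y _; apply indb_existsb_eq.
        eapply Rle_trans. apply lsum_cnt. apply le_INR; auto. }
      apply Rle_trans with (r2 := B + INR k * (Dr * B)).
      { apply Rplus_le_compat_l. apply Rmult_le_compat_l. apply pos_INR.
        apply Rle_trans with (r2 := lsum (fun a => lsum (fun z => indb (near G h x z) * cnt (snd a) z) (seq 0 n)) G).
        - apply lsum_le; intros a Ha. unfold e. destruct (existsb _ _) eqn:Ex; simpl.
          + apply existsb_exists in Ex. destruct Ex as [z [Hz Hn]].
            rewrite Forall_forall in HG. destruct (HG a Ha) as [_ [Hlt _]].
            rewrite Forall_forall in Hlt. specialize (Hlt z Hz).
            eapply Rle_trans; [|apply (lsum_In_le _ _ z)].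
            simpl. rewrite Hn. simpl. unfold cnt. apply (count_occ_In Nat.eq_dec) in Hz.
            apply le_INR in Hz. simpl in Hz. lra.
            intros; apply Rmult_le_pos; [apply indb_nonneg|apply cnt_nonneg].
            apply in_seq; lia.
          + apply lsum_nonneg; intros; apply Rmult_le_pos; [apply indb_nonneg|apply cnt_nonneg].
        - rewrite lsum_swap. unfold B. rewrite <- lsum_scal. apply lsum_le; intros z Hz.
          apply in_seq in Hz. rewrite lsum_scal, <- degn_lsum.
          pose proof (Hdeg z ltac:(lia)). pose proof (indb_nonneg (near G h x z)).
          rewrite Rmult_comm. apply Rmult_le_compat_r; auto. }
      simpl. assert (0 <= INR k * Dr) by (apply Rmult_le_pos; auto; apply pos_INR).
      assert (B * (INR k * Dr) <= (1 + INR k * Dr) ^ h * (INR k * Dr)) by (apply Rmult_le_compat_r; auto).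
      nra.
Qed.

Lemma lsum_const_seq n c : lsum (fun _ : nat => c) (seq 0 n) = INR n * c.
Proof. rewrite lsum_const, length_seq; auto. Qed.

Lemma Ncnt_ball q n k G Dr l : Forall (good_c q n k) G -> 0 <= Dr ->
  (forall z, (z < n)%nat -> INR (degn G z) <= Dr) ->
  Ncnt n G l <= INR n * (1 + INR k * Dr) ^ (Nat.div2 l).
Proof. intros. unfold Ncnt. rewrite <- lsum_const_seq.
  apply lsum_le; intros i _. unfold dist_le. eapply ball_bound; eauto. Qed.

Lemma Ncnt_le_sq n G l : Ncnt n G l <= INR n * INR n.
Proof. unfold Ncnt. rewrite <- lsum_const_seq.
  apply lsum_le; intros i _. rewrite <- (Rmult_1_r (INR n)), <- lsum_const_seq.
  apply lsum_le; intros; apply indb_le1. Qed.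

Definition model_ok (good : fgraph -> Prop) (T : nat -> (fgraph -> R) -> R) (S : R) : Prop :=
  0 <= S /\
  (forall m F1 F2, T m (fun G => F1 G + F2 G) = T m F1 + T m F2) /\
  (forall m a F, T m (fun G => a * F G) = a * T m F) /\
  (forall m F1 F2, (forall G, good G -> F1 G <= F2 G) -> T m F1 <= T m F2) /\
  (forall m, T m (fun _ => 1) <= S ^ m).

Lemma T_zero good T S m : model_ok good T S -> T m (fun _ => 0) = 0.
Proof. intros (_ & _ & Hs & _). replace (fun _ : fgraph => 0) with (fun G : fgraph => 0 * 0).
  rewrite (Hs m 0 (fun _ => 0)). ring. apply functional_extensionality; intros; ring. Qed.

Lemma T_lsum {A} good T S m (f : A -> fgraph -> R) l : model_ok good T S ->
  T m (fun G => lsum (fun i => f i G) l) = lsum (fun i => T m (f i)) l.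
Proof. intros H. induction l; simpl.
  - apply (T_zero good T S m H).
  - destruct H as (_ & Ha & _). change (T m (fun G => f a G + lsum (fun i => f i G) l) = T m (f a) + lsum (fun i => T m (f i)) l).
    rewrite (Ha m (f a) (fun G => lsum (fun i => f i G) l)). rewrite IHl. reflexivity. Qed.

Lemma T_nonneg good T S m F : model_ok good T S -> (forall G, good G -> 0 <= F G) -> 0 <= T m F.
Proof. intros H HF. rewrite <- (T_zero good T S m H). destruct H as (_ & _ & _ & Hm & _). apply Hm; auto. Qed.

Lemma T_bound good T S m F B : model_ok good T S -> 0 <= B -> (forall G, good G -> F G <= B) -> T m F <= B * S ^ m.
Proof. intros H HB HF. pose proof H as (_ & _ & Hs & Hm & H1).
  apply Rle_trans with (r2 := T m (fun G => B * 1)). apply Hm; intros; rewrite Rmult_1_r; auto.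
  rewrite (Hs m B (fun _ => 1)). apply Rmult_le_compat_l; auto. Qed.

Lemma T_summable good T S lam F B : model_ok good T S -> 0 <= lam -> 0 <= B ->
  (forall G, good G -> 0 <= F G <= B) ->
  infinite_sum (fun m => po lam m * T m F) (series (fun m => po lam m * T m F)).
Proof. intros H Hl HB HF.
  destruct (inf_comp (fun m => po lam m * T m F) (fun m => B * (po lam m * S ^ m)) (B * (exp (- lam) * exp (lam * S)))) as [L HL].
  - intros m. split. apply Rmult_le_pos. apply po_nonneg; auto. apply (T_nonneg good T S); auto; intros; apply HF; auto.
    rewrite <- Rmult_assoc, (Rmult_comm B), Rmult_assoc. apply Rmult_le_compat_l. apply po_nonneg; auto.
    apply (T_bound good T S); auto. intros; apply HF; auto.
  - apply inf_scal, po_geom.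
  - rewrite (series_eq _ L HL); auto. Qed.

Definition Ft q n i j : fgraph -> R := fun G =>
  tv2 q (marg2 q n G i j) (fun a b => marg1 q n G i a * marg1 q n G j b).
Definition Fo q n l i s : fgraph -> R := fun G =>
  gibbs q n G s * tv1 q (marg1 q n G i) (condmarg q n G i (nabla n G i l s)).

Lemma model_pair q n l good T S lam Z Z1 A B H V :
  model_ok good T S -> 0 <= lam -> 0 < Z ->
  infinite_sum (fun m => po lam m * T m (fun _ => 1)) Z1 -> Z1 <= Z ->
  (forall G, good G -> good_w q n G /\ Ncnt n G l <= A + B * H G) ->
  infinite_sum (fun m => po lam m * T m H) V -> 0 <= A -> 0 <= B ->
  lsum (fun i => lsum (fun j => series (fun m => po lam m * T m (Ft q n i j)) / Z) (seq 0 n)) (seq 0 n)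
  <= A + B * V / Z + INR n * lsum (fun i => lsum (fun s => series (fun m => po lam m * T m (Fo q n l i s)) / Z) (tuples q n)) (seq 0 n).
Proof.
  intros Hok Hlam HZ HZ1 HZ1Z Hgood HV HA HB.
  pose proof Hok as (HS & Hadd & Hscal & Hmono & H1).
  assert (S1 : forall i j, infinite_sum (fun m => po lam m * T m (Ft q n i j)) (series (fun m => po lam m * T m (Ft q n i j)))).
  { intros. apply (T_summable good T S lam _ 1); auto; try lra. intros G HG. destruct (Hgood G HG) as [Hw _].
    split; [apply tv2_nonneg|apply tv2_le1; auto]. }
  assert (S2 : forall i s, In s (tuples q n) -> infinite_sum (fun m => po lam m * T m (Fo q n l i s)) (series (fun m => po lam m * T m (Fo q n l i s)))).
  { intros i s Hs. apply (T_summable good T S lam _ 1); auto; try lra. intros G HG. destruct (Hgood G HG) as [Hw _].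
    unfold Fo. pose proof (gibbs_nonneg q n G s Hw Hs). pose proof (gibbs_le1 q n G s Hw Hs).
    pose proof (tv1_nonneg q (marg1 q n G i) (condmarg q n G i (nabla n G i l s))).
    pose proof (tv1_cond_le1 q n G i (nabla n G i l s) Hw).
    split. apply Rmult_le_pos; auto. rewrite <- (Rmult_1_r 1). apply Rmult_le_compat; auto. }
  set (U := lsum (fun i => lsum (fun j => series (fun m => po lam m * T m (Ft q n i j))) (seq 0 n)) (seq 0 n)).
  set (S' := lsum (fun i => lsum (fun s => series (fun m => po lam m * T m (Fo q n l i s))) (tuples q n)) (seq 0 n)).
  assert (HU : infinite_sum (fun m => lsum (fun i => lsum (fun j => po lam m * T m (Ft q n i j)) (seq 0 n)) (seq 0 n)) U).
  { apply inf_lsum; intros i _. apply (inf_lsum (fun j m => po lam m * T m (Ft q n i j))). intros; apply S1. }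
  assert (HW : infinite_sum (fun m => A * (po lam m * T m (fun _ => 1)) + B * (po lam m * T m H) +
        INR n * lsum (fun i => lsum (fun s => po lam m * T m (Fo q n l i s)) (tuples q n)) (seq 0 n))
        (A * Z1 + B * V + INR n * S')).
  { apply inf_plus. apply inf_plus; apply inf_scal; auto. apply inf_scal.
    apply inf_lsum; intros i _. apply (inf_lsum (fun s m => po lam m * T m (Fo q n l i s))). intros; apply S2; auto. }
  assert (Hle : U <= A * Z1 + B * V + INR n * S').
  { eapply inf_le; [|exact HU|exact HW]. intros m. simpl.
    rewrite (lsum_ext _ (fun i => po lam m * lsum (fun j => T m (Ft q n i j)) (seq 0 n))) by (intros; apply lsum_scal).
    rewrite lsum_scal.
    rewrite (lsum_ext (fun i => lsum (fun s => po lam m * T m (Fo q n l i s)) (tuples q n))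
                      (fun i => po lam m * lsum (fun s => T m (Fo q n l i s)) (tuples q n))) by (intros; apply lsum_scal).
    rewrite lsum_scal.
    replace (A * (po lam m * T m (fun _ => 1)) + B * (po lam m * T m H) +
      INR n * (po lam m * lsum (fun i => lsum (fun s => T m (Fo q n l i s)) (tuples q n)) (seq 0 n)))
      with (po lam m * (A * T m (fun _ => 1) + B * T m H + INR n * lsum (fun i => lsum (fun s => T m (Fo q n l i s)) (tuples q n)) (seq 0 n))) by ring.
    apply Rmult_le_compat_l. apply po_nonneg; auto.
    rewrite (lsum_ext (fun i => lsum (fun j => T m (Ft q n i j)) (seq 0 n))
       (fun i => T m (fun G => lsum (fun j => Ft q n i j G) (seq 0 n))))
       by (intros; symmetry; apply (T_lsum good T S); auto).
    rewrite <- (T_lsum good T S m (fun i G => lsum (fun j => Ft q n i j G) (seq 0 n))) by auto.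
    rewrite (lsum_ext (fun i => lsum (fun s => T m (Fo q n l i s)) (tuples q n))
       (fun i => T m (fun G => lsum (fun s => Fo q n l i s G) (tuples q n))))
       by (intros; symmetry; apply (T_lsum good T S); auto).
    rewrite <- (T_lsum good T S m (fun i G => lsum (fun s => Fo q n l i s G) (tuples q n))) by auto.
    rewrite <- (Hscal m A), <- (Hscal m B), <- (Hscal m (INR n)), <- Hadd, <- Hadd.
    apply Hmono. intros G HG. destruct (Hgood G HG) as [Hw HN].
    pose proof (graph_bound q n G l Hw). unfold Ft. unfold Sov in H0. unfold Fo. lra. }
  assert (E1 : lsum (fun i => lsum (fun j => series (fun m => po lam m * T m (Ft q n i j)) / Z) (seq 0 n)) (seq 0 n) = U / Z).
  { unfold U, Rdiv. rewrite <- lsum_scal_r. apply lsum_ext; intros. apply lsum_scal_r. }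
  assert (E2 : lsum (fun i => lsum (fun s => series (fun m => po lam m * T m (Fo q n l i s)) / Z) (tuples q n)) (seq 0 n) = S' / Z).
  { unfold S', Rdiv. rewrite <- lsum_scal_r. apply lsum_ext; intros. apply lsum_scal_r. }
  rewrite E1, E2.
  assert (U / Z <= (A * Z1 + B * V + INR n * S') / Z).
  { unfold Rdiv. apply Rmult_le_compat_r; auto. left; apply Rinv_0_lt_compat; auto. }
  assert (A * Z1 / Z <= A).
  { unfold Rdiv. rewrite Rmult_assoc. rewrite <- (Rmult_1_r A) at 2. apply Rmult_le_compat_l; auto.
    apply div_le1. split; auto. eapply inf_nonneg; [|exact HZ1]. intros; apply Rmult_le_pos. apply po_nonneg; auto.
    apply (T_nonneg good T S); auto; intros; lra. }
  unfold Rdiv in *. rewrite !Rmult_plus_distr_r in H0. lra.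
Qed.

Lemma exp_ge x : 1 + x <= exp x.
Proof. destruct (Req_dec x 0). subst; rewrite exp_0; lra. left; apply exp_ineq1; auto. Qed.

Lemma exp_mult_pow m t : exp (INR m * t) = exp t ^ m.
Proof. induction m. simpl. rewrite Rmult_0_l, exp_0; auto.
  rewrite S_INR, Rmult_plus_distr_r, Rmult_1_l, exp_plus, IHm. simpl. ring. Qed.

Lemma two_pow_exp L : 2 ^ L = exp (INR L * ln 2).
Proof. rewrite exp_mult_pow, exp_ln; lra. Qed.

Lemma ln2_pos : 0 < ln 2.
Proof. rewrite <- ln_1. apply ln_increasing; lra. Qed.

Lemma exp_poly y m : 0 <= y -> (y / INR (S m)) ^ (S m) <= exp y.
Proof. intros Hy. assert (0 < INR (S m)) by (apply lt_0_INR; lia).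
  replace y with (INR (S m) * (y / INR (S m))) at 2 by (field; lra).
  rewrite exp_mult_pow. apply pow_incr. split. apply Rmult_le_pos; auto. left; apply Rinv_0_lt_compat; auto.
  pose proof (exp_ge (y / INR (S m))). lra. Qed.

Lemma poly_exp c h : 0 <= c -> forall eps, eps > 0 -> exists M, forall L, (L >= M)%nat ->
  (c * INR L) ^ h / 2 ^ L < eps.
Proof.
  intros Hc eps He.
  set (c0 := (ln 2 / INR (S h)) ^ (S h)).
  assert (Hc0 : 0 < c0). { unfold c0. apply pow_lt. apply Rdiv_lt_0_compat. apply ln2_pos. apply lt_0_INR; lia. }
  destruct (INR_unbounded (c ^ h / (c0 * eps))) as [M HM].
  exists (S M). intros L HL.
  assert (HL1 : 1 <= INR L). { replace 1 with (INR 1) by auto. apply le_INR; lia. }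
  assert (HLM : INR M < INR L). { apply lt_INR; lia. }
  assert (H2 : c0 * INR L ^ (S h) <= 2 ^ L).
  { rewrite two_pow_exp. eapply Rle_trans; [|apply exp_poly]. unfold c0.
    rewrite <- Rpow_mult_distr. apply Req_le. f_equal. field. apply not_0_INR; lia.
    apply Rmult_le_pos. lra. left; apply ln2_pos. }
  assert (Hp : 0 < 2 ^ L) by (apply pow_lt; lra).
  apply Rle_lt_trans with (r2 := (c ^ h * INR L ^ h) / (c0 * INR L ^ (S h))).
  { rewrite Rpow_mult_distr. unfold Rdiv. apply Rmult_le_compat_l.
    apply Rmult_le_pos; apply pow_le; lra.
    apply Rinv_le_contravar; auto. apply Rmult_lt_0_compat; auto. apply pow_lt; lra. }
  assert (0 < INR L ^ h) by (apply pow_lt; lra).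
  replace (c ^ h * INR L ^ h / (c0 * INR L ^ S h)) with (c ^ h / c0 / INR L).
  2:{ simpl. field. split; lra. }
  apply (Rmult_lt_reg_r (INR L)). lra. unfold Rdiv at 1. rewrite Rmult_assoc, Rinv_l by lra.
  rewrite Rmult_1_r.
  assert (c ^ h / c0 < eps * INR M).
  { apply (Rmult_lt_reg_r (/ (c0 * eps))). apply Rinv_0_lt_compat, Rmult_lt_0_compat; lra.
    replace (eps * INR M * / (c0 * eps)) with (INR M / c0) by (field; lra).
    replace (c ^ h / c0 * / (c0 * eps)) with (c ^ h / (c0 * eps) / c0) by (field; lra).
    unfold Rdiv. apply Rmult_lt_compat_r. apply Rinv_0_lt_compat; auto. exact HM. }
  assert (eps * INR M < eps * INR L) by (apply Rmult_lt_compat_l; lra). lra.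
Qed.

Definition Dn (n : nat) : nat := (2 * Nat.log2 n + 2)%nat.

Lemma err_pois (k : nat) (K : R) (h : nat) : 0 <= K -> forall eps, eps > 0 -> exists N, forall n, (n >= N)%nat ->
  (1 + INR k * INR (Dn n)) ^ h / INR n + INR n * K / 2 ^ (Dn n) < eps.
Proof.
  intros HK eps He.
  destruct (poly_exp (1 + 4 * INR k) h ltac:(pose proof (pos_INR k); lra) (eps / 2) ltac:(lra)) as [M HM].
  destruct (INR_unbounded (2 * K / eps)) as [NK HNK].
  exists (Nat.max 2 (Nat.max (2 ^ M) (S NK))). intros n Hn.
  set (L := Nat.log2 n).
  assert (Hn2 : (2 <= n)%nat) by lia.
  destruct (Nat.log2_spec n ltac:(lia)) as [HL1 HL2]. fold L in HL1, HL2.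
  assert (HL : (1 <= L)%nat). { unfold L. replace 1%nat with (Nat.log2 2) by reflexivity. apply Nat.log2_le_mono; lia. }
  assert (HLM : (L >= M)%nat). { unfold L. rewrite <- (Nat.log2_pow2 M) by lia. apply Nat.log2_le_mono; lia. }
  assert (Hnpos : 0 < INR n) by (apply lt_0_INR; lia).
  assert (R1 : INR (2 ^ L) <= INR n) by (apply le_INR; auto).
  assert (R2 : INR n < INR (2 ^ S L)) by (apply lt_INR; auto).
  rewrite pow_INR in R1, R2. replace (INR 2) with 2 in R1, R2 by (simpl; lra).
  assert (HLr : 1 <= INR L) by (replace 1 with (INR 1) by auto; apply le_INR; auto).
  assert (Hk : 0 <= INR k) by apply pos_INR.
  assert (T1 : (1 + INR k * INR (Dn n)) ^ h / INR n <= ((1 + 4 * INR k) * INR L) ^ h / 2 ^ L).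
  { unfold Rdiv. apply Rmult_le_compat.
    - apply pow_le. apply Rplus_le_le_0_compat; [lra|]. apply Rmult_le_pos; auto. apply pos_INR.
    - left; apply Rinv_0_lt_compat; auto.
    - apply pow_incr. split. apply Rplus_le_le_0_compat; [lra|]. apply Rmult_le_pos; auto. apply pos_INR.
      unfold Dn. rewrite plus_INR, mult_INR. fold L. simpl INR. nra.
    - apply Rinv_le_contravar; auto. apply pow_lt; lra. }
  specialize (HM L HLM).
  assert (T2 : INR n * K / 2 ^ (Dn n) <= K / INR n).
  { unfold Dn. fold L. replace (2 * L + 2)%nat with (S L + S L)%nat by lia. rewrite pow_add.
    assert (0 < 2 ^ S L) by (apply pow_lt; lra).
    unfold Rdiv. apply (Rmult_le_reg_r (2 ^ S L * 2 ^ S L)). nra.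
    rewrite Rmult_assoc, Rinv_l by nra. rewrite Rmult_1_r.
    replace (K * / INR n * (2 ^ S L * 2 ^ S L)) with (K * (2 ^ S L / INR n) * 2 ^ S L) by (field; lra).
    assert (1 <= 2 ^ S L / INR n). { apply (Rmult_le_reg_r (INR n)); auto. unfold Rdiv.
      rewrite Rmult_assoc, Rinv_l by lra. lra. }
    assert (K * 1 <= K * (2 ^ S L / INR n)) by (apply Rmult_le_compat_l; auto).
    assert (INR n <= 2 ^ S L) by lra.
    nra. }
  assert (T3 : K / INR n < eps / 2).
  { assert (INR NK < INR n) by (apply lt_INR; lia).
    apply (Rmult_lt_reg_r (INR n)); auto. unfold Rdiv. rewrite Rmult_assoc, Rinv_l by lra.
    assert (2 * K / eps * eps < INR n * eps) by (apply Rmult_lt_compat_r; lra).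
    replace (2 * K / eps * eps) with (2 * K) in H0 by (field; lra). nra. }
  lra.
Qed.

Lemma draw_list_prop {A} (D : list (R * A)) (P : A -> Prop) m :
  (forall c, In c D -> 0 <= fst c /\ P (snd c)) ->
  forall pc, In pc (draw_list D m) -> 0 <= fst pc /\ Forall P (snd pc).
Proof. intros HD. induction m; intros pc Hpc; simpl in Hpc.
  - destruct Hpc as [<-|[]]. simpl. split; [lra|constructor].
  - apply in_flat_map in Hpc. destruct Hpc as [c [Hc Hpc]]. apply in_map_iff in Hpc.
    destruct Hpc as [cs [<- Hcs]]. destruct (HD c Hc). destruct (IHm cs Hcs). simpl.
    split. apply Rmult_le_pos; auto. constructor; auto. Qed.

Lemma draw_prod {A} (D : list (R * A)) (g : A -> R) m :
  lsum (fun pc => fst pc * fold_right (fun a acc => g a * acc) 1 (snd pc)) (draw_list D m)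
  = (lsum (fun c => fst c * g (snd c)) D) ^ m.
Proof. induction m; simpl.
  - unfold lsum; simpl; ring.
  - rewrite lsum_flat_map, <- IHm, <- lsum_scal_r. apply lsum_ext; intros c _.
    rewrite lsum_map. simpl. rewrite <- lsum_scal. apply lsum_ext; intros; ring. Qed.

Definition Tp (n k : nat) (rho : list (R * (list nat -> R))) (m : nat) (F : fgraph -> R) : R :=
  lsum (fun pc => fst pc * F (snd pc)) (draw_list (pois_draws n k rho) m).

Lemma pois_draws_prop q n k rho : spec q k rho ->
  forall c, In c (pois_draws n k rho) -> 0 <= fst c /\ good_c q n k (snd c).
Proof. intros (_ & Hnn & _ & Hpos) c Hc. unfold pois_draws in Hc. apply in_flat_map in Hc.
  destruct Hc as [pw [Hpw Hc]]. apply in_map_iff in Hc. destruct Hc as [t [<- Ht]].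
  apply tuples_prop in Ht. destruct Ht as [Lt Ft]. simpl.
  rewrite Forall_forall in Hnn, Hpos. split.
  - apply div_nonneg. apply Hnn; auto. apply pow_le, pos_INR.
  - unfold good_c; simpl. split; [lia|]. split; auto. intros s Ls Fs. left. apply (Hpos pw Hpw); auto. lia. Qed.

Lemma sum_fst_pois q n k rho : (1 <= n)%nat -> spec q k rho -> lsum fst (pois_draws n k rho) = 1.
Proof. intros Hn (_ & _ & Hsum & _). unfold pois_draws. rewrite lsum_flat_map.
  rewrite <- Hsum. apply lsum_ext; intros pw _. rewrite lsum_map. simpl.
  rewrite lsum_const, length_tuples, pow_INR. field. apply pow_nonzero. apply not_0_INR; lia. Qed.

Lemma fold_one (G : fgraph) : fold_right (fun (_ : constraint) acc => 1 * acc) 1 G = 1.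
Proof. induction G; simpl; auto. rewrite IHG; ring. Qed.

Lemma Tp_one q n k rho m : (1 <= n)%nat -> spec q k rho -> Tp n k rho m (fun _ => 1) = 1.
Proof. intros Hn Hs. unfold Tp.
  rewrite (lsum_ext _ (fun pc => fst pc * fold_right (fun (_ : constraint) acc => 1 * acc) 1 (snd pc)))
    by (intros; rewrite fold_one; auto).
  rewrite (draw_prod _ (fun _ => 1)). rewrite (lsum_ext _ fst) by (intros; ring).
  rewrite (sum_fst_pois q); auto. apply pow1. Qed.

Lemma Tp_ok q n k rho : (1 <= n)%nat -> spec q k rho ->
  model_ok (fun G => Forall (good_c q n k) G) (Tp n k rho) 1.
Proof. intros Hn Hs. unfold model_ok. split; [lra|]. split; [|split; [|split]].
  - intros. unfold Tp. rewrite <- lsum_plus. apply lsum_ext; intros; ring.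
  - intros. unfold Tp. rewrite <- lsum_scal. apply lsum_ext; intros; ring.
  - intros m F1 F2 H. unfold Tp. apply lsum_le; intros pc Hpc.
    destruct (draw_list_prop _ (good_c q n k) m (pois_draws_prop q n k rho Hs) pc Hpc).
    apply Rmult_le_compat_l; auto.
  - intros m. rewrite (Tp_one q); auto. rewrite pow1; lra. Qed.

Lemma pow2_degn G z : 2 ^ degn G z = fold_right (fun a acc => 2 ^ count_occ Nat.eq_dec (snd a) z * acc) 1 G.
Proof. induction G; simpl; auto. rewrite pow_add, IHG. reflexivity. Qed.

Lemma tuples_pow2 n k z : lsum (fun t => 2 ^ count_occ Nat.eq_dec t z) (tuples n k) <= (INR n + 1) ^ k.
Proof. induction k; simpl. unfold lsum; simpl; lra.
  rewrite lsum_flat_map.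
  apply Rle_trans with (r2 := lsum (fun x => (1 + indb (Nat.eqb x z)) * lsum (fun t => 2 ^ count_occ Nat.eq_dec t z) (tuples n k)) (seq 0 n)).
  - apply Req_le, lsum_ext; intros x _. rewrite lsum_map. rewrite <- lsum_scal. apply lsum_ext; intros t _.
    simpl. destruct (Nat.eq_dec x z); destruct (Nat.eqb_spec x z); try lia; simpl; ring.
  - rewrite lsum_scal_r. apply Rmult_le_compat.
    + apply lsum_nonneg; intros; pose proof (indb_nonneg (Nat.eqb x z)); lra.
    + apply lsum_nonneg; intros; apply pow_le; lra.
    + rewrite lsum_plus, lsum_const, length_seq. pose proof (indb_seq' z 0 n). lra.
    + auto. Qed.

Lemma beta_bound q n k rho z : (1 <= n)%nat -> spec q k rho ->
  lsum (fun c => fst c * 2 ^ count_occ Nat.eq_dec (snd (snd c)) z) (pois_draws n k rho) <= (1 + / INR n) ^ k.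
Proof. intros Hn (_ & Hnn & Hsum & _). unfold pois_draws. rewrite lsum_flat_map.
  assert (Hnr : 0 < INR n) by (apply lt_0_INR; lia).
  apply Rle_trans with (r2 := lsum (fun pw => fst pw * ((1 + / INR n) ^ k)) rho).
  - apply lsum_le; intros pw Hpw. rewrite lsum_map. simpl.
    rewrite Forall_forall in Hnn. pose proof (Hnn pw Hpw).
    rewrite lsum_scal. unfold Rdiv. rewrite Rmult_assoc. apply Rmult_le_compat_l; auto.
    replace ((1 + / INR n) ^ k) with (/ INR n ^ k * (INR n + 1) ^ k).
    apply Rmult_le_compat_l. left; apply Rinv_0_lt_compat, pow_lt; auto. apply tuples_pow2.
    rewrite <- pow_inv, <- Rpow_mult_distr. f_equal. field; lra.
  - rewrite lsum_scal_r, Hsum. lra. Qed.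

Lemma bern x k : 0 <= x -> (1 + x) ^ k <= 1 + INR k * x * (1 + x) ^ k.
Proof. intros Hx. induction k. simpl. lra.
  rewrite S_INR. simpl. assert (1 <= (1 + x) ^ k) by (apply pow_R1_Rle; lra). nra. Qed.

Lemma exp_le' x y : x <= y -> exp x <= exp y.
Proof. intros [H|H]. left; apply exp_increasing; auto. subst; lra. Qed.

Lemma exp_beta_bound (d : R) n k (b : R) : (1 <= n)%nat -> (1 <= k)%nat -> 0 < d -> b <= (1 + / INR n) ^ k ->
  exp (- (d * INR n / INR k)) * exp (d * INR n / INR k * b) <= exp (d * 2 ^ k).
Proof. intros Hn Hk Hd Hb. rewrite <- exp_plus. apply exp_le'.
  assert (Hnr : 0 < INR n) by (apply lt_0_INR; lia). assert (Hkr : 0 < INR k) by (apply lt_0_INR; lia).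
  assert (H0 : 0 <= / INR n) by (left; apply Rinv_0_lt_compat; auto).
  assert (/ INR n <= 1). { rewrite <- Rinv_1. apply Rinv_le_contravar; try lra. replace 1 with (INR 1) by auto. apply le_INR; auto. }
  assert (B1 : (1 + / INR n) ^ k <= 2 ^ k) by (apply pow_incr; lra).
  pose proof (bern (/ INR n) k H0).
  assert (B2 : b - 1 <= INR k * / INR n * 2 ^ k).
  { assert (INR k * / INR n * (1 + / INR n) ^ k <= INR k * / INR n * 2 ^ k).
    apply Rmult_le_compat_l; auto. apply Rmult_le_pos; lra. lra. }
  assert (d * INR n / INR k * (b - 1) <= d * INR n / INR k * (INR k * / INR n * 2 ^ k)).
  { apply Rmult_le_compat_l; auto. unfold Rdiv. apply Rmult_le_pos. apply Rmult_le_pos; lra. left; apply Rinv_0_lt_compat; auto. }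
  replace (d * INR n / INR k * (INR k * / INR n * 2 ^ k)) with (d * 2 ^ k) in H2 by (field; lra).
  replace (- (d * INR n / INR k) + d * INR n / INR k * b) with (d * INR n / INR k * (b - 1)) by ring. lra. Qed.

Definition Hp (n : nat) (G : fgraph) : R := lsum (fun z => 2 ^ degn G z) (seq 0 n).

Definition betaz (n k : nat) (rho : list (R * (list nat -> R))) (z : nat) : R :=
  lsum (fun c => fst c * 2 ^ count_occ Nat.eq_dec (snd (snd c)) z) (pois_draws n k rho).

Lemma Tp_H n k rho m : Tp n k rho m (Hp n) = lsum (fun z => betaz n k rho z ^ m) (seq 0 n).
Proof. unfold Tp, Hp. rewrite (lsum_ext _ (fun pc => lsum (fun z => fst pc * 2 ^ degn (snd pc) z) (seq 0 n)))
    by (intros; symmetry; apply lsum_scal).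
  rewrite lsum_swap. apply lsum_ext; intros z _. unfold betaz.
  rewrite <- (draw_prod _ (fun a : constraint => 2 ^ count_occ Nat.eq_dec (snd a) z)).
  apply lsum_ext; intros. rewrite pow2_degn. reflexivity. Qed.

Lemma V_pois q n k rho (d : R) : (1 <= n)%nat -> (1 <= k)%nat -> 0 < d -> spec q k rho ->
  exists V, infinite_sum (fun m => po (d * INR n / INR k) m * Tp n k rho m (Hp n)) V /\
            V <= INR n * exp (d * 2 ^ k).
Proof. intros Hn Hk Hd Hs.
  set (lam := d * INR n / INR k).
  exists (lsum (fun z => exp (- lam) * exp (lam * betaz n k rho z)) (seq 0 n)). split.
  - apply inf_ext with (u := fun m => lsum (fun z => po lam m * betaz n k rho z ^ m) (seq 0 n)).
    intros m. rewrite Tp_H. rewrite lsum_scal. reflexivity.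
    apply (inf_lsum (fun z m => po lam m * betaz n k rho z ^ m)). intros; apply po_geom.
  - rewrite <- lsum_const_seq. apply lsum_le; intros z _. apply exp_beta_bound; auto.
    apply (beta_bound q); auto. Qed.

Lemma Ncnt_pois q n k G l D : Forall (good_c q n k) G ->
  Ncnt n G l <= INR n * (1 + INR k * INR D) ^ (Nat.div2 l) + (INR n * INR n / 2 ^ D) * Hp n G.
Proof. intros HG.
  assert (HH : 0 <= Hp n G) by (apply lsum_nonneg; intros; apply pow_le; lra).
  assert (P2 : 0 < 2 ^ D) by (apply pow_lt; lra).
  assert (HB : 0 <= INR n * INR n / 2 ^ D) by (apply div_nonneg; [apply Rmult_le_pos; apply pos_INR|lra]).
  destruct (classic (forall z, (z < n)%nat -> (degn G z <= D)%nat)) as [Hall|Hno].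
  - pose proof (Ncnt_ball q n k G (INR D) l HG (pos_INR D) ltac:(intros; apply le_INR; auto)).
    assert (0 <= INR n * INR n / 2 ^ D * Hp n G) by (apply Rmult_le_pos; auto). lra.
  - apply not_all_ex_not in Hno. destruct Hno as [z Hz].
    assert (Hz1 : (z < n)%nat) by (destruct (Nat.lt_ge_cases z n); auto; exfalso; apply Hz; intros; lia).
    assert (Hz2 : (D < degn G z)%nat) by (destruct (Nat.lt_ge_cases D (degn G z)); auto; exfalso; apply Hz; intros; lia).
    assert (2 ^ D <= Hp n G).
    { unfold Hp. eapply Rle_trans; [|apply (lsum_In_le _ _ z)]. apply Rle_pow; [lra|lia].
      intros; apply pow_le; lra. apply in_seq; lia. }
    assert (1 <= Hp n G / 2 ^ D). { apply (Rmult_le_reg_r (2 ^ D)); auto. unfold Rdiv.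
      rewrite Rmult_assoc, Rinv_l by lra. lra. }
    pose proof (Ncnt_le_sq n G l).
    assert (0 <= INR n * (1 + INR k * INR D) ^ Nat.div2 l).
    { apply Rmult_le_pos. apply pos_INR. apply pow_le. pose proof (pos_INR k); pose proof (pos_INR D); nra. }
    assert (INR n * INR n * 1 <= INR n * INR n * (Hp n G / 2 ^ D)).
    { apply Rmult_le_compat_l; auto. apply Rmult_le_pos; apply pos_INR. }
    replace (INR n * INR n / 2 ^ D * Hp n G) with (INR n * INR n * (Hp n G / 2 ^ D)) by (field; lra).
    lra. Qed.

Lemma pc_from_model q n l (E : nat -> (fgraph -> R) -> R) good T S lam Z Z1 A B H V :
  (1 <= n)%nat -> model_ok good T S -> 0 <= lam -> 0 < Z ->
  infinite_sum (fun m => po lam m * T m (fun _ => 1)) Z1 -> Z1 <= Z ->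
  (forall G, good G -> good_w q n G /\ Ncnt n G l <= A + B * H G) ->
  infinite_sum (fun m => po lam m * T m H) V -> 0 <= A -> 0 <= B ->
  (forall F, E n F = series (fun m => po lam m * T m F) / Z) ->
  pair_corr q E n <= overlap_quantity q E l n + (A + B * V / Z) / INR n ^ 2 /\ 0 <= pair_corr q E n.
Proof.
  intros Hn Hok Hlam HZ HZ1 HZZ Hg HV HA HB HE.
  pose proof (model_pair q n l good T S lam Z Z1 A B H V Hok Hlam HZ HZ1 HZZ Hg HV HA HB) as M.
  unfold pair_corr, overlap_quantity.
  assert (E1 : lsum (fun i => lsum (fun j => E n (fun G => tv2 q (marg2 q n G i j) (fun a b => marg1 q n G i a * marg1 q n G j b))) (seq 0 n)) (seq 0 n)
     = lsum (fun i => lsum (fun j => series (fun m => po lam m * T m (Ft q n i j)) / Z) (seq 0 n)) (seq 0 n)).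
  { apply lsum_ext; intros; apply lsum_ext; intros. rewrite HE. reflexivity. }
  assert (E2 : lsum (fun i => lsum (fun s => E n (fun G => gibbs q n G s * tv1 q (marg1 q n G i) (condmarg q n G i (nabla n G i l s)))) (tuples q n)) (seq 0 n)
     = lsum (fun i => lsum (fun s => series (fun m => po lam m * T m (Fo q n l i s)) / Z) (tuples q n)) (seq 0 n)).
  { apply lsum_ext; intros; apply lsum_ext; intros. rewrite HE. reflexivity. }
  rewrite E1, E2.
  assert (Hnr : 0 < INR n) by (apply lt_0_INR; lia).
  split.
  - set (X := lsum (fun i => lsum (fun j => series (fun m => po lam m * T m (Ft q n i j)) / Z) (seq 0 n)) (seq 0 n)) in *.
    set (Y := lsum (fun i => lsum (fun s => series (fun m => po lam m * T m (Fo q n l i s)) / Z) (tuples q n)) (seq 0 n)) in *.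
    set (C := A + B * V / Z).
    assert (X <= C + INR n * Y) by (unfold C; lra).
    replace (/ INR n ^ 2 * X) with (X / INR n ^ 2) by (field; lra).
    replace (/ INR n * Y) with (INR n * Y / INR n ^ 2) by (field; lra).
    unfold Rdiv. rewrite <- Rmult_plus_distr_r. apply Rmult_le_compat_r.
    left; apply Rinv_0_lt_compat, pow_lt; auto. lra.
  - apply Rmult_le_pos. left; apply Rinv_0_lt_compat, pow_lt; auto.
    apply lsum_nonneg; intros i _; apply lsum_nonneg; intros j _. apply div_nonneg; [|lra].
    eapply inf_nonneg; [|apply (T_summable good T S lam _ 1); auto; try lra].
    + intros m. apply Rmult_le_pos. apply po_nonneg; auto. apply (T_nonneg good T S); auto.
      intros; apply tv2_nonneg.
    + intros G HG. split. apply tv2_nonneg. apply tv2_le1. apply Hg; auto.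
Qed.

Lemma final_lim (pc : nat -> R) (ovq err : nat -> nat -> R) :
  lim_limsup_zero ovq ->
  (forall l n, (1 <= n)%nat -> pc n <= ovq l n + err l n /\ 0 <= pc n) ->
  (forall l eps, eps > 0 -> exists N, forall n, (n >= N)%nat -> err l n < eps) ->
  Un_cv pc 0.
Proof. intros Hov Hb Herr eps He.
  destruct (Hov (eps / 2) ltac:(lra)) as [L HL]. destruct (HL L (le_n L)) as [N1 HN1].
  destruct (Herr L (eps / 2) ltac:(lra)) as [N2 HN2].
  exists (Nat.max 1 (Nat.max N1 N2)). intros n Hn.
  destruct (Hb L n ltac:(lia)) as [H1 H2]. specialize (HN1 n ltac:(lia)). specialize (HN2 n ltac:(lia)).
  unfold R_dist. rewrite Rminus_0_r, Rabs_right by lra. lra. Qed.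

Lemma pois_main q k rho (d : R) : (1 <= q)%nat -> (3 <= k)%nat -> spec q k rho -> 0 < d ->
  lim_limsup_zero (overlap_quantity q (EPois d k rho)) -> Un_cv (pair_corr q (EPois d k rho)) 0.
Proof.
  intros Hq Hk Hs Hd Hov.
  set (K := exp (d * 2 ^ k)).
  apply (final_lim _ _ (fun l n => (1 + INR k * INR (Dn n)) ^ (Nat.div2 l) / INR n + INR n * K / 2 ^ (Dn n)) Hov).
  2:{ intros l. apply err_pois. left; apply exp_pos. }
  intros l n Hn.
  assert (Hnr : 0 < INR n) by (apply lt_0_INR; lia).
  assert (Hkr : 0 < INR k) by (apply lt_0_INR; lia).
  set (lam := d * INR n / INR k).
  assert (Hlam : 0 <= lam) by (unfold lam; apply div_nonneg; [apply Rmult_le_pos|]; lra).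
  set (D := Dn n). set (h := Nat.div2 l).
  destruct (V_pois q n k rho d Hn ltac:(lia) Hd Hs) as [V [HV HVb]].
  assert (P2 : 0 < 2 ^ D) by (apply pow_lt; lra).
  assert (HA : 0 <= INR n * (1 + INR k * INR D) ^ h).
  { apply Rmult_le_pos. lra. apply pow_le. pose proof (pos_INR D); nra. }
  assert (HB : 0 <= INR n * INR n / 2 ^ D) by (apply div_nonneg; nra).
  destruct (pc_from_model q n l (EPois d k rho) (fun G => Forall (good_c q n k) G) (Tp n k rho) 1 lam 1
     (exp (- lam) * exp (lam * 1)) (INR n * (1 + INR k * INR D) ^ h) (INR n * INR n / 2 ^ D) (Hp n) V)
    as [Hb Hnn]; auto.
  - apply Tp_ok; auto.
  - lra.
  - apply inf_ext with (u := fun m => po lam m * 1 ^ m). intros m. rewrite (Tp_one q), pow1; auto. apply po_geom.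
  - rewrite <- exp_plus. replace (- lam + lam * 1) with 0 by ring. rewrite exp_0; lra.
  - intros G HG. split. apply (good_w_of q n k); auto. apply (Ncnt_pois q); auto.
  - intros F. unfold EPois, Tp. fold lam. unfold Rdiv at 1. rewrite Rinv_1, Rmult_1_r. reflexivity.
  - split; auto. eapply Rle_trans; [exact Hb|]. apply Rplus_le_compat_l.
    assert (V * (INR n * INR n / 2 ^ D) <= INR n * K * (INR n * INR n / 2 ^ D)) by (apply Rmult_le_compat_r; auto).
    replace ((INR n * (1 + INR k * INR D) ^ h + INR n * INR n / 2 ^ D * V / 1) / INR n ^ 2)
      with ((1 + INR k * INR D) ^ h / INR n + V / 2 ^ D) by (field; lra).
    assert (V / 2 ^ D <= INR n * K / 2 ^ D). { unfold Rdiv. apply Rmult_le_compat_r. left; apply Rinv_0_lt_compat; auto. unfold K; lra. }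
    fold D. lra.
Qed.

Definition Pr (k : nat) (a : (list nat -> R) * nat) : Prop := (snd a <= k)%nat /\ forall s, 0 <= fst a s.

Lemma reg_draws_prop q k eps rho : spec q k rho -> 0 < eps <= 1 ->
  forall c, In c (reg_draws q k eps rho) -> 0 <= fst c /\ Pr k (snd c).
Proof. intros (_ & Hnn & _ & Hpos) He c Hc. unfold reg_draws in Hc. apply in_flat_map in Hc.
  destruct Hc as [pw [Hpw Hc]]. apply in_map_iff in Hc. destruct Hc as [J [<- HJ]].
  rewrite Forall_forall in Hnn, Hpos. simpl. split.
  - apply Rmult_le_pos. apply Rmult_le_pos. apply Hnn; auto. apply pow_le; lra. apply pow_le; lra.
  - unfold Pr; simpl. split.
    + unfold subsets in HJ. apply in_map_iff in HJ. destruct HJ as [b [<- _]].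
      eapply Nat.le_trans. apply filter_length_le. rewrite length_seq; auto.
    + intros s. unfold psiJ. apply div_nonneg. apply lsum_nonneg. intros t Ht.
      destruct (list_eq_dec _ _ _); [|lra]. apply tuples_prop in Ht. left; apply (Hpos pw Hpw); tauto.
      apply pow_le, pos_INR. Qed.

Lemma In_firstn {A} (x : A) m l : In x (firstn m l) -> In x l.
Proof. intros H. rewrite <- (firstn_skipn m l). apply in_or_app; auto. Qed.
Lemma In_skipn {A} (x : A) m l : In x (skipn m l) -> In x l.
Proof. intros H. rewrite <- (firstn_skipn m l). apply in_or_app; auto. Qed.

Lemma build_good q n k ar : Forall (Pr k) ar -> forall t, Forall (fun v => (v < n)%nat) t ->
  Forall (good_c q n k) (build ar t) /\ forall z, (degn (build ar t) z <= count_occ Nat.eq_dec t z)%nat.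
Proof. induction ar as [|a ar IH]; intros Har t Ht; simpl.
  - split; [constructor|]. intros; lia.
  - inversion Har; subst. destruct H1 as [Hk Hw].
    assert (Hs : Forall (fun v => (v < n)%nat) (skipn (snd a) t)).
    { rewrite Forall_forall in *. intros x Hx; apply Ht; eapply In_skipn; eauto. }
    destruct (IH H2 _ Hs) as [G1 G2]. split.
    + constructor; auto. unfold good_c; simpl. split. eapply Nat.le_trans; [apply firstn_le_length|]; auto.
      split. rewrite Forall_forall in *. intros x Hx; apply Ht; eapply In_firstn; eauto.
      intros; apply Hw.
    + intros z. specialize (G2 z). rewrite <- (firstn_skipn (snd a) t) at 3. rewrite count_occ_app. lia. Qed.

Definition good_R q n k d (G : fgraph) : Prop :=
  Forall (good_c q n k) G /\ forall z, (z < n)%nat -> (degn G z <= d)%nat.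

Definition Tr (q n d k : nat) eps rho (m : nat) (F : fgraph -> R) : R :=
  lsum (reg_term n d F) (draw_list (reg_draws q k eps rho) m).
Definition Ar (q n d k : nat) eps rho (m : nat) : R :=
  lsum (reg_acc n d) (draw_list (reg_draws q k eps rho) m).

Lemma fold_one' {A} (G : list A) : fold_right (fun (_ : A) acc => 1 * acc) 1 G = 1.
Proof. induction G; simpl; auto. rewrite IHG; ring. Qed.

Lemma sum_fst_draw {A} (D : list (R * A)) m : lsum fst (draw_list D m) = (lsum fst D) ^ m.
Proof. rewrite (lsum_ext _ (fun pc => fst pc * fold_right (fun (_ : A) acc => 1 * acc) 1 (snd pc)))
    by (intros; rewrite fold_one'; ring).
  rewrite (draw_prod _ (fun _ => 1)). f_equal. apply lsum_ext; intros; ring. Qed.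

Lemma reg_term_one n d pc : 0 <= fst pc -> reg_term n d (fun _ => 1) pc <= reg_acc n d pc.
Proof. intros H. unfold reg_term, reg_acc. destruct (Nat.leb _ _); [|lra].
  rewrite <- (Rmult_1_r (fst pc)) at 2. apply Rmult_le_compat_l; auto.
  apply div_le1. rewrite lsum_const. split; [rewrite Rmult_1_r; apply pos_INR|lra]. Qed.

Lemma reg_acc_le n d pc : 0 <= fst pc -> 0 <= reg_acc n d pc <= fst pc.
Proof. intros H. unfold reg_acc. destruct (Nat.leb _ _); lra. Qed.

Lemma Tr_ok q n d k eps rho : spec q k rho -> 0 < eps <= 1 ->
  model_ok (good_R q n k d) (Tr q n d k eps rho) (lsum fst (reg_draws q k eps rho)).
Proof. intros Hs He.
  assert (DP : forall m pc, In pc (draw_list (reg_draws q k eps rho) m) -> 0 <= fst pc /\ Forall (Pr k) (snd pc))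
    by (intros m; apply (draw_list_prop _ (Pr k) m (reg_draws_prop q k eps rho Hs He))).
  unfold model_ok. split; [|split; [|split; [|split]]].
  - apply lsum_nonneg; intros c Hc. apply (reg_draws_prop q k eps rho Hs He c Hc).
  - intros m F1 F2. unfold Tr. rewrite <- lsum_plus. apply lsum_ext; intros pc _.
    unfold reg_term. destruct (Nat.leb _ _); [|ring]. rewrite lsum_plus. unfold Rdiv. ring.
  - intros m a F. unfold Tr. rewrite <- lsum_scal. apply lsum_ext; intros pc _.
    unfold reg_term. destruct (Nat.leb _ _); [|ring]. rewrite lsum_scal. unfold Rdiv. ring.
  - intros m F1 F2 HF. unfold Tr. apply lsum_le; intros pc Hpc. destruct (DP m pc Hpc) as [H0 HP].
    unfold reg_term. destruct (Nat.leb _ _); [|lra]. apply Rmult_le_compat_l; auto.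
    unfold Rdiv. apply Rmult_le_compat_r. apply Rinv_nonneg, pos_INR.
    apply lsum_le; intros t Ht. apply filter_In in Ht. destruct Ht as [Ht Hd].
    apply tuples_prop in Ht. destruct (build_good q n k _ HP t (proj2 Ht)) as [B1 B2].
    apply HF. split; auto. intros z Hz. specialize (B2 z). unfold deg_ok in Hd.
    rewrite forallb_forall in Hd. specialize (Hd z (proj2 (in_seq _ _ _) (conj (Nat.le_0_l _) Hz))).
    apply Nat.leb_le in Hd. lia.
  - intros m. unfold Tr. rewrite <- sum_fst_draw. apply lsum_le; intros pc Hpc.
    destruct (DP m pc Hpc) as [H0 _]. pose proof (reg_term_one n d pc H0). pose proof (reg_acc_le n d pc H0). lra.
Qed.

Lemma reg_main q k rho (d : nat) (eps : R) : (1 <= q)%nat -> (3 <= k)%nat -> spec q k rho -> (1 <= d)%nat -> 0 < eps <= 1 ->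
  lim_limsup_zero (overlap_quantity q (EReg q d k eps rho)) -> Un_cv (pair_corr q (EReg q d k eps rho)) 0.
Proof.
  intros Hq Hk Hs Hd He Hov.
  apply (final_lim _ _ (fun l n => (1 + INR k * INR d) ^ (Nat.div2 l) / INR n) Hov).
  2:{ intros l e He'. set (C := (1 + INR k * INR d) ^ Nat.div2 l).
      assert (HC : 0 <= C) by (apply pow_le; pose proof (pos_INR k); pose proof (pos_INR d); nra).
      destruct (INR_unbounded (C / e)) as [N HN]. exists (S N). intros n Hn.
      assert (INR N < INR n) by (apply lt_INR; lia). assert (0 < INR n) by (pose proof (pos_INR N); lra).
      apply (Rmult_lt_reg_r (INR n)); auto. unfold Rdiv; rewrite Rmult_assoc, Rinv_l by lra.
      assert (C / e * e < INR n * e) by (apply Rmult_lt_compat_r; lra).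
      replace (C / e * e) with C in H1 by (field; lra). lra. }
  intros l n Hn.
  assert (Hnr : 0 < INR n) by (apply lt_0_INR; lia).
  assert (Hkr : 0 < INR k) by (apply lt_0_INR; lia).
  set (lam := INR d * INR n / INR k).
  assert (Hlam : 0 <= lam) by (unfold lam; apply div_nonneg; [apply Rmult_le_pos|]; try lra; apply pos_INR).
  set (S := lsum fst (reg_draws q k eps rho)).
  pose proof (Tr_ok q n d k eps rho Hs He) as Hok. fold S in Hok.
  assert (HS : 0 <= S) by apply Hok.
  set (h := Nat.div2 l).
  assert (HA_nn : forall m, 0 <= Ar q n d k eps rho m <= S ^ m).
  { intros m. unfold Ar, S. rewrite <- sum_fst_draw. split.
    - apply lsum_nonneg; intros pc Hpc.
      destruct (draw_list_prop _ (Pr k) m (reg_draws_prop q k eps rho Hs He) pc Hpc) as [H0 _].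
      apply reg_acc_le; auto.
    - apply lsum_le; intros pc Hpc.
      destruct (draw_list_prop _ (Pr k) m (reg_draws_prop q k eps rho Hs He) pc Hpc) as [H0 _].
      apply reg_acc_le; auto. }
  destruct (inf_comp (fun m => po lam m * Ar q n d k eps rho m) (fun m => po lam m * S ^ m) (exp (- lam) * exp (lam * S)))
    as [Z HZ].
  { intros m. destruct (HA_nn m). split. apply Rmult_le_pos; auto. apply po_nonneg; auto.
    apply Rmult_le_compat_l; auto. apply po_nonneg; auto. }
  { apply po_geom. }
  assert (HZpos : 0 < Z).
  { eapply Rlt_le_trans; [|apply (inf_first _ _ (fun m => Rmult_le_pos _ _ (po_nonneg lam m Hlam) (proj1 (HA_nn m))) HZ)].
    unfold Ar; simpl. unfold lsum; simpl. unfold reg_acc; simpl. unfold po; simpl.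
    pose proof (exp_pos (- lam)). unfold Rdiv. rewrite Rinv_1. lra. }
  set (Z1 := series (fun m => po lam m * Tr q n d k eps rho m (fun _ => 1))).
  assert (HZ1 : infinite_sum (fun m => po lam m * Tr q n d k eps rho m (fun _ => 1)) Z1).
  { apply (T_summable (good_R q n k d) _ S lam _ 1); auto; try lra. intros; lra. }
  assert (HZ1Z : Z1 <= Z).
  { eapply inf_le; [|exact HZ1|exact HZ]. intros m. apply Rmult_le_compat_l. apply po_nonneg; auto.
    unfold Tr, Ar. apply lsum_le; intros pc Hpc.
    destruct (draw_list_prop _ (Pr k) m (reg_draws_prop q k eps rho Hs He) pc Hpc) as [H0 _].
    apply reg_term_one; auto. }
  assert (HA : 0 <= INR n * (1 + INR k * INR d) ^ h).
  { apply Rmult_le_pos. lra. apply pow_le. pose proof (pos_INR d); nra. }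
  destruct (pc_from_model q n l (EReg q d k eps rho) (good_R q n k d) (Tr q n d k eps rho) S lam Z Z1
     (INR n * (1 + INR k * INR d) ^ h) 0 (fun _ => 0) 0) as [Hb Hnn]; auto; try lra.
  - intros; match goal with H : good_R _ _ _ _ _ |- _ => destruct H as [HG HD] end.
    split. apply (good_w_of q n k); auto.
    rewrite Rmult_0_l, Rplus_0_r. apply (Ncnt_ball q n k G (INR d) l HG (pos_INR d)).
    intros; apply le_INR; auto.
  - apply inf_ext with (u := fun _ => 0). intros m. rewrite (T_zero _ _ _ m Hok). ring. apply inf_zero.
  - intros F. unfold EReg. f_equal. apply series_eq. exact HZ.
  - split; auto. eapply Rle_trans; [exact Hb|]. apply Rplus_le_compat_l. apply Req_le.
    fold h. field. lra.
Qed.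

Lemma lemma6_proof (q k : nat) (rho : list (R * (list nat -> R))) :
  (1 <= q)%nat -> (3 <= k)%nat -> spec q k rho ->
  (forall d : R, 0 < d ->
     lim_limsup_zero (overlap_quantity q (EPois d k rho)) ->
     Un_cv (pair_corr q (EPois d k rho)) 0)
  /\
  (forall (d : nat) (eps : R), (1 <= d)%nat -> 0 < eps <= 1 ->
     lim_limsup_zero (overlap_quantity q (EReg q d k eps rho)) ->
     Un_cv (pair_corr q (EReg q d k eps rho)) 0).
Proof. intros Hq Hk Hs. split.
  - intros d Hd Hov. apply (pois_main q k rho d); auto.
  - intros d eps Hd He Hov. apply reg_main; auto. Qed.


Theorem lemma6 (q k : nat) (rho : list (R * (list nat -> R))) :
  (1 <= q)%nat -> (3 <= k)%nat -> spec q k rho ->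
  (forall d : R, 0 < d ->
     lim_limsup_zero (overlap_quantity q (EPois d k rho)) ->
     Un_cv (pair_corr q (EPois d k rho)) 0)
  /\
  (forall (d : nat) (eps : R), (1 <= d)%nat -> 0 < eps <= 1 ->
     lim_limsup_zero (overlap_quantity q (EReg q d k eps rho)) ->
     Un_cv (pair_corr q (EReg q d k eps rho)) 0).
Proof. exact (lemma6_proof q k rho). Qed.
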